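(* Let $0<\alpha\le2$, $j\ne0$, $V\in C^2(\mathbb{T})$, and $G(x)=\sum_{k=0}^{n}p_k\cos(2\pi kx)$ with $p_0>0$ and $p_k>0$ for $1\le k\le n$. Then problem (P) has a unique solution $(m,\overline{H})$, given by $$m(x)=\frac{c_j}{\left(a_0^*+\sum_{k=1}^{n}a_k^*\cos(2\pi kx)+b_k^*\sin(2\pi kx)-V(x)\right)^{1/\alpha}},\qquad \overline{H}=a_0^*-p_0,$$ where $(a_0^*,\dots,a_n^*,b_1^*,\dots,b_n^* )$ is the unique maximizer over $\mathcal{C}$ of $$\Phi_\alpha(a_0,\dots,a_n,b_1,\dots,b_n)-a_0-\sum_{k=1}^n\frac{1}{2p_k}(a_k^2+b_k^2).$$
   Context: $\mathbb{T}=\mathbb{R}/\mathbb{Z}$. Problem (P): given $0<\alpha\le2$, $j\ne0$, $V,G\in C^2(\mathbb{T})$, find $(m,\overline{H})\in C(\mathbb{T})\times\mathbb{R}$ with $m>0$ on $\mathbb{T}$, $\int_{\mathbb{T}}m=1$, and $\frac{j^2}{2m(x)^\alpha}+V(x)=\int_{\mathbb{T}}G(x-y)m(y)\,dy+\overline{H}$ for all $x\in\mathbb{T}$. Set $c_j=(j^2/2)^{1/\alpha}$; $\phi_\alpha(t)=\frac{c_j\alpha}{\alpha-1}t^{(\alpha-1)/\alpha}$ if $\alpha\ne1$, $\phi_\alpha(t)=c_j\ln t$ if $\alpha=1$, for $t>0$. $\mathcal{C}\subset\mathbb{R}^{2n+1}$ is the set of $(a_0,\dots,a_n,b_1,\dots,b_n)$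 with $a_0+\sum_{k=1}^n(a_k\cos(2\pi kx)+b_k\sin(2\pi kx))-V(x)>0$ for all $x\in\mathbb{T}$, and $\Phi_\alpha(a_0,\dots,b_n)=\int_{\mathbb{T}}\phi_\alpha\big(a_0+\sum_{k=1}^n(a_k\cos(2\pi ky)+b_k\sin(2\pi ky))-V(y)\big)\,dy$ on $\mathcal{C}$. *)

(* Defs.v *)
From Stdlib Require Import Reals Lra ClassicalEpsilon.
Open Scope R_scope.

(* Integral over T = R/Z of a 1-periodic function, taken over [0,1].
   Defined as the Riemann integral when f is Riemann integrable on [0,1]
   (RiemannInt is independent of the integrability proof); all integrands
   used below are continuous, hence integrable. *)
Definition int01 (f : R -> R) : R :=
  epsilon (inhabits 0)
    (fun l => exists pr : Riemann_integrable f 0 1, RiemannInt pr = l).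

Fixpoint sum1 (n : nat) (f : nat -> R) : R :=
  match n with
  | O => 0
  | S m => sum1 m f + f (S m)
  end.

Definition sum0 (n : nat) (f : nat -> R) : R := f O + sum1 n f.

(* 1-periodic functions = functions on T *)
Definition periodic1 (f : R -> R) : Prop := forall x, f (x + 1) = f x.

Definition C2_T (f : R -> R) : Prop :=
  periodic1 f /\
  exists f1 f2 : R -> R,
    (forall x, derivable_pt_lim f x (f1 x)) /\
    (forall x, derivable_pt_lim f1 x (f2 x)) /\
    continuity f2.

Definition trig (n : nat) (a0 : R) (a b : nat -> R) (x : R) : R :=
  a0 + sum1 n (fun k => a k * cos (2 * PI * INR k * x) + b k * sin (2 * PI * INR k * x)).

Definition c_j (alpha j : R) : R := Rpower (j ^ 2 / 2) (1 / alpha).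

Definition phi_alpha (alpha j t : R) : R :=
  if Req_dec_T alpha 1 then c_j alpha j * ln t
  else c_j alpha j * alpha / (alpha - 1) * Rpower t ((alpha - 1) / alpha).

(* membership in the set C (only a_1..a_n, b_1..b_n are relevant) *)
Definition inC (n : nat) (V : R -> R) (a0 : R) (a b : nat -> R) : Prop :=
  forall x, trig n a0 a b x - V x > 0.

Definition Phi_alpha (alpha j : R) (n : nat) (V : R -> R) (a0 : R) (a b : nat -> R) : R :=
  int01 (fun y => phi_alpha alpha j (trig n a0 a b y - V y)).

Definition Jfun (alpha j : R) (n : nat) (V : R -> R) (p : nat -> R)
    (a0 : R) (a b : nat -> R) : R :=
  Phi_alpha alpha j n V a0 a b - a0
  - sum1 n (fun k => / (2 * p k) * (a k ^ 2 + b k ^ 2)).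

Definition coef_eq (n : nat) (a0 : R) (a b : nat -> R) (a0' : R) (a' b' : nat -> R) : Prop :=
  a0 = a0' /\ (forall k, (1 <= k <= n)%nat -> a k = a' k /\ b k = b' k).

Definition solves_P (alpha j : R) (V G : R -> R) (m : R -> R) (H : R) : Prop :=
  continuity m /\ periodic1 m /\ (forall x, m x > 0) /\ int01 m = 1 /\
  forall x, j ^ 2 / (2 * Rpower (m x) alpha) + V x
            = int01 (fun y => G (x - y) * m y) + H.

(* Main.v *)
Require Import Defs.
From Stdlib Require Import Reals.
Open Scope R_scope.
From Stdlib Require Import Lra Lia ZArith Classical ClassicalEpsilon FunctionalExtensionality.
From Coquelicot Require Import Coquelicot.
From mathcomp Require all_boot all_order all_algebra.
From mathcomp Require all_classical all_reals all_analysis.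
From mathcomp Require Rstruct Rstruct_topology.

Module EVTmod.
From mathcomp Require Import all_boot all_order all_algebra.
From mathcomp Require Import all_classical all_reals all_analysis.
From mathcomp Require Import Rstruct Rstruct_topology.
Import Order.TTheory GRing.Theory Num.Theory numFieldNormedType.Exports.
Local Open Scope classical_set_scope.
Local Open Scope ring_scope.

Lemma entry_le_norm n (v : 'rV[R]_n) i : `|v ord0 i| <= `|v|.
Proof.
have /mapP[j Hj ->] : `|v ord0 i| \in [seq `|v x.1 x.2| | x : 'I_1 * 'I_n].
  by apply/mapP; exists (ord0, i) => //=; rewrite mem_enum.
by rewrite [leRHS]/Num.Def.normr /= mx_normrE; apply/bigmax_geP; right => /=; exists j.
Qed.

Lemma evt_rV (N : nat) (F : 'rV[R]_N.+1 -> R) (B : set 'rV[R]_N.+1) (M : R) :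
  B !=set0 ->
  (forall w, B w -> forall i, `|w ord0 i| <= M) ->
  (forall w : 'rV[R]_N.+1, (forall e, 0 < e -> exists v : 'rV[R]_N.+1, B v /\ forall i, `|v ord0 i - w ord0 i| < e) -> B w) ->
  (forall w, B w -> forall e, 0 < e -> exists d, 0 < d /\ forall v : 'rV[R]_N.+1, B v ->
     (forall i, `|v ord0 i - w ord0 i| < d) -> `|F v - F w| < e) ->
  exists2 c, c \in B & forall t, t \in B -> F t <= F c.
Proof.
move=> B0 Bb Bcl Fc.
apply: compact_EVT_max => //.
- have Bcl' : closed B.
    move=> w /= cw; apply: Bcl => e e0.
    have nb : nbhs w (ball w e) by apply: nbhsx_ballx.
    have := cw (ball w e) nb.
    case=> v [Bv bv]; exists v; split => // i.
    move: bv; rewrite -ball_normE /ball_ /= => bv.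
    apply: le_lt_trans bv; have := (@entry_le_norm _ (w - v)%R i); rewrite !mxE distrC; exact.
  have cpt := (@rV_compact _ N.+1 (fun=> `[(- M), M]%classic) (fun=> @segment_compact _ _ _)).
  apply: (subclosed_compact Bcl' cpt).
  move=> w Bw i /=. rewrite /= in_itv /= -ler_norml; exact: Bb.
- apply/subspace_continuousP => w Bw.
  change (F x @[x --> within B (nbhs w)] --> F w).
  have FF : Filter (within B (nbhs w)) by exact: within_filter.
  refine (proj2 (@cvgrPdist_lt R R^o _ _ FF F (F w)) _) => e e0.
  have [d [d0 Hd]] := Fc w Bw e e0.
  rewrite /within /=; apply/nbhs_ballP; exists d => // v bv Bv.
  rewrite distrC; apply: Hd => // i.
  move: bv; rewrite -ball_normE /ball_ /= => bv.
  apply: le_lt_trans bv; have := (@entry_le_norm _ (w - v)%R i); rewrite !mxE distrC; exact.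
Qed.

Lemma evt_nat (N : nat) (F : (nat -> R) -> R) (A : (nat -> R) -> Prop) (M : R) :
  (exists v, A v) ->
  (forall v, A v -> forall i, (i <= N)%coq_nat -> Rle (Rabs (v i)) M) ->
  (forall v, A v -> forall i, (N < i)%coq_nat -> v i = IZR Z0) ->
  (forall u, (forall i, (N < i)%coq_nat -> u i = IZR Z0) ->
     (forall e, Rlt (IZR Z0) e -> exists v, A v /\ forall i, (i <= N)%coq_nat -> Rlt (Rabs (Rminus (v i) (u i))) e) -> A u) ->
  (forall u, A u -> forall e, Rlt (IZR Z0) e -> exists d, Rlt (IZR Z0) d /\ forall v, A v ->
     (forall i, (i <= N)%coq_nat -> Rlt (Rabs (Rminus (v i) (u i))) d) -> Rlt (Rabs (Rminus (F v) (F u))) e) ->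
  exists c, A c /\ forall v, A v -> Rle (F v) (F c).
Proof.
move=> [v0 Av0] Ab A0 Acl Fc.
pose toV (w : 'rV[R]_N.+1) : nat -> R := fun k => if (k <= N)%N then w ord0 (inord k) else 0.
pose enc (v : nat -> R) : 'rV[R]_N.+1 := \row_(i < N.+1) v i.
have encK v : A v -> toV (enc v) = v.
  move=> Av; apply: funext => k; rewrite /toV /enc.
  case: ifP => kN; first by rewrite mxE inordK.
  by rewrite (A0 v Av) //; apply/ssrnat.ltP; rewrite ltnNge kN.
have toVi (w : 'rV[R]_N.+1) (i : 'I_N.+1) : toV w i = w ord0 i.
  by rewrite /toV -ltnS ltn_ord inord_val.
have h1 : (fun w => A (toV w)) !=set0 by exists (enc v0); rewrite /= encK.
have h2 : forall w : 'rV[R]_N.+1, A (toV w) -> forall i, `|w ord0 i| <= M.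
  move=> w Aw i; rewrite -RabsE -toVi; apply/RleP; apply: Ab => //.
  by apply/ssrnat.leP; rewrite -ltnS ltn_ord.
have h3 : forall w : 'rV[R]_N.+1, (forall e, 0 < e -> exists v : 'rV[R]_N.+1, A (toV v) /\ forall i, `|v ord0 i - w ord0 i| < e) -> A (toV w).
  move=> w H; apply: Acl.
  + by move=> i /ssrnat.ltP iN; rewrite /toV leqNgt iN.
  + move=> e /RltP e0; have [v [Av Hv]] := H e e0; exists (toV v); split => // i /ssrnat.leP iN.
    have -> : i = (Ordinal (iN : (i < N.+1)%N) : nat) by [].
    rewrite !toVi RabsE; apply/RltP; exact: Hv.
have h4 : forall w : 'rV[R]_N.+1, A (toV w) -> forall e, 0 < e -> exists d, 0 < d /\ forall v : 'rV[R]_N.+1, A (toV v) ->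
     (forall i, `|v ord0 i - w ord0 i| < d) -> `|F (toV v) - F (toV w)| < e.
  move=> w Aw e e0; have [d [/RltP d0 Hd]] := Fc _ Aw e (RltP e0).
  exists d; split => // v Av Hv; rewrite -RabsE; apply/RltP; apply: Hd => // i /ssrnat.leP iN.
  have -> : i = (Ordinal (iN : (i < N.+1)%N) : nat) by [].
  rewrite !toVi RabsE; apply/RltP; exact: Hv.
have [c cB cmax] := @evt_rV N (fun w => F (toV w)) (fun w => A (toV w)) M h1 h2 h3 h4.
exists (toV c); split; first by move: cB; rewrite inE.
move=> v Av; rewrite -(encK v Av); apply/RleP; apply: cmax; rewrite inE /= encK //.
Qed.
End EVTmod.


Set Bullet Behavior "Strict Subproofs".
Open Scope R_scope.

Definition cont (f : R -> R) := forall x, continuous f x.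

Lemma cont_ct (f : R -> R) x : continuous f x -> continuity_pt f x.
Proof. intros H. apply continuity_pt_filterlim. exact H. Qed.

Lemma int01_RInt f : cont f -> int01 f = RInt f 0 1.
Proof.
  intros Hf. unfold int01.
  assert (pr : Riemann_integrable f 0 1).
  { apply continuity_implies_RiemannInt; [lra|]. intros; apply cont_ct, Hf. }
  assert (H : exists l, exists pr : Riemann_integrable f 0 1, RiemannInt pr = l).
  { exists (RiemannInt pr). exists pr. reflexivity. }
  destruct (epsilon_spec (inhabits 0) _ H) as [pr' E].
  rewrite <- E. symmetry. apply RInt_Reals.
Qed.

Lemma ex01 f : cont f -> ex_RInt f 0 1.
Proof. intros Hf. apply (@ex_RInt_continuous R_CompleteNormedModule). intros. apply Hf. Qed.

Lemma cont_plus f g : cont f -> cont g -> cont (fun x => f x + g x).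
Proof. intros Hf Hg x. apply (continuous_plus f g); auto. Qed.
Lemma cont_minus f g : cont f -> cont g -> cont (fun x => f x - g x).
Proof. intros Hf Hg x. apply (continuous_minus f g); auto. Qed.
Lemma cont_mult f g : cont f -> cont g -> cont (fun x => f x * g x).
Proof. intros Hf Hg x. apply (continuous_mult f g); auto. Qed.
Lemma cont_const c : cont (fun _ => c).
Proof. intros x. apply continuous_const. Qed.
Lemma cont_id : cont (fun x => x).
Proof. intros x. apply continuous_id. Qed.
Lemma cont_scal c f : cont f -> cont (fun x => c * f x).
Proof. intros Hf. apply cont_mult; auto using cont_const. Qed.
Lemma cont_abs f : cont f -> cont (fun x => Rabs (f x)).
Proof. intros Hf x. apply (continuous_comp f Rabs). apply Hf. apply continuous_Rabs. Qed.
Lemma cont_cos k : cont (fun y => cos (2 * PI * INR k * y)).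
Proof. intros x. apply (@ex_derive_continuous R_AbsRing R_NormedModule). auto_derive. auto. Qed.
Lemma cont_sin k : cont (fun y => sin (2 * PI * INR k * y)).
Proof. intros x. apply (@ex_derive_continuous R_AbsRing R_NormedModule). auto_derive. auto. Qed.

Lemma I_plus f g : cont f -> cont g -> int01 (fun x => f x + g x) = int01 f + int01 g.
Proof.
  intros Hf Hg. rewrite !int01_RInt; auto using cont_plus.
  apply (@RInt_plus R_CompleteNormedModule f g 0 1); apply ex01; auto.
Qed.
Lemma I_scal c f : cont f -> int01 (fun x => c * f x) = c * int01 f.
Proof.
  intros Hf. rewrite !int01_RInt; auto using cont_scal.
  apply (@RInt_scal R_CompleteNormedModule f 0 1 c); apply ex01; auto.
Qed.
Lemma I_opp f : cont f -> int01 (fun x => - f x) = - int01 f.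
Proof.
  intros Hf. replace (fun x => - f x) with (fun x => -1 * f x).
  rewrite I_scal; auto; ring. apply functional_extensionality; intros; ring.
Qed.
Lemma I_minus f g : cont f -> cont g -> int01 (fun x => f x - g x) = int01 f - int01 g.
Proof.
  intros Hf Hg. unfold Rminus. rewrite I_plus, I_opp; auto.
  intros x. apply (continuous_opp g); auto.
Qed.
Lemma I_const c : int01 (fun _ => c) = c.
Proof.
  rewrite int01_RInt by apply cont_const. rewrite RInt_const.
  unfold scal; simpl; unfold mult; simpl. ring.
Qed.
Lemma I_le f g : cont f -> cont g -> (forall x, 0 <= x <= 1 -> f x <= g x) -> int01 f <= int01 g.
Proof.
  intros Hf Hg H. rewrite !int01_RInt; auto.
  apply RInt_le; auto using ex01; [lra|]. intros; apply H; lra.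
Qed.
Lemma I_abs f : cont f -> Rabs (int01 f) <= int01 (fun x => Rabs (f x)).
Proof.
  intros Hf. rewrite !int01_RInt; auto using cont_abs.
  apply abs_RInt_le; auto using ex01; lra.
Qed.
Lemma I_ext f g : (forall x, f x = g x) -> int01 f = int01 g.
Proof. intros H. replace f with g; auto. apply functional_extensionality; auto. Qed.

Lemma I_pos_strict f : cont f -> (forall x, 0 <= x <= 1 -> 0 < f x) -> 0 < int01 f.
Proof.
  intros Hf H.
  destruct (continuity_ab_min f 0 1) as [m [Hm Hm01]]; [lra| intros; apply cont_ct, Hf |].
  apply Rlt_le_trans with (int01 (fun _ => f m)).
  - rewrite I_const. apply H; lra.
  - apply I_le; auto using cont_const.
Qed.

Lemma I_cos k : (1 <= k)%nat -> int01 (fun y => cos (2 * PI * INR k * y)) = 0.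
Proof.
  intros Hk. rewrite int01_RInt by apply cont_cos.
  assert (Hk' : 0 < INR k) by (apply lt_0_INR; lia).
  assert (HP := PI_RGT_0).
  assert (H := @is_RInt_derive R_CompleteNormedModule (fun y => sin (2 * PI * INR k * y) / (2 * PI * INR k)) (fun y => cos (2 * PI * INR k * y)) 0 1).
  specialize (H ltac:(intros x _; auto_derive; auto; field; split; lra)).
  specialize (H ltac:(intros x _; apply cont_cos)).
  rewrite (is_RInt_unique _ _ _ _ H). unfold minus, plus, opp; simpl.
  rewrite Rmult_1_r, Rmult_0_r, sin_0.
  replace (2 * PI * INR k) with (0 + 2 * INR k * PI) by ring.
  rewrite sin_period. rewrite sin_0. field. split; lra.
Qed.

Lemma I_sin k : (1 <= k)%nat -> int01 (fun y => sin (2 * PI * INR k * y)) = 0.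
Proof.
  intros Hk. rewrite int01_RInt by apply cont_sin.
  assert (Hk' : 0 < INR k) by (apply lt_0_INR; lia).
  assert (HP := PI_RGT_0).
  assert (H := @is_RInt_derive R_CompleteNormedModule (fun y => - cos (2 * PI * INR k * y) / (2 * PI * INR k)) (fun y => sin (2 * PI * INR k * y)) 0 1).
  specialize (H ltac:(intros x _; auto_derive; auto; field; split; lra)).
  specialize (H ltac:(intros x _; apply cont_sin)).
  rewrite (is_RInt_unique _ _ _ _ H). unfold minus, plus, opp; simpl.
  rewrite Rmult_1_r, Rmult_0_r, cos_0.
  replace (2 * PI * INR k) with (0 + 2 * INR k * PI) by ring.
  rewrite cos_period. rewrite cos_0. field. split; lra.
Qed.

Lemma sum1_ext_in m f g : (forall k, (1 <= k <= m)%nat -> f k = g k) -> sum1 m f = sum1 m g.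
Proof.
  induction m; intros H; simpl; auto.
  rewrite IHm. rewrite H; auto; lia. intros; apply H; lia.
Qed.
Lemma sum1_plus m f g : sum1 m (fun k => f k + g k) = sum1 m f + sum1 m g.
Proof. induction m; simpl; [ring|]. rewrite IHm; ring. Qed.
Lemma sum1_scal m c f : sum1 m (fun k => c * f k) = c * sum1 m f.
Proof. induction m; simpl; [ring|]. rewrite IHm; ring. Qed.
Lemma sum1_minus m f g : sum1 m (fun k => f k - g k) = sum1 m f - sum1 m g.
Proof. induction m; simpl; [ring|]. rewrite IHm; ring. Qed.
Lemma sum1_le m f g : (forall k, (1 <= k <= m)%nat -> f k <= g k) -> sum1 m f <= sum1 m g.
Proof.
  induction m; intros H; simpl; [lra|].
  apply Rplus_le_compat. apply IHm; intros; apply H; lia. apply H; lia.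
Qed.
Lemma sum1_ge0 m f : (forall k, (1 <= k <= m)%nat -> 0 <= f k) -> 0 <= sum1 m f.
Proof.
  intros H. replace 0 with (sum1 m (fun _ => 0)). apply sum1_le; auto.
  clear H; induction m; simpl; auto; rewrite IHm; ring.
Qed.
Lemma sum1_const m c : sum1 m (fun _ => c) = INR m * c.
Proof. induction m; simpl sum1; [simpl; ring|]. rewrite IHm, S_INR; ring. Qed.
Lemma sum1_term m f k : (forall k, (1 <= k <= m)%nat -> 0 <= f k) -> (1 <= k <= m)%nat -> f k <= sum1 m f.
Proof.
  induction m; intros H Hk; [lia|]. simpl.
  destruct (Nat.eq_dec k (S m)) as [->|Hne].
  - assert (0 <= sum1 m f) by (apply sum1_ge0; intros; apply H; lia). lra.
  - assert (f k <= sum1 m f) by (apply IHm; [intros; apply H; lia| lia]).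
    assert (0 <= f (S m)) by (apply H; lia). lra.
Qed.
Lemma sum1_abs m f : Rabs (sum1 m f) <= sum1 m (fun k => Rabs (f k)).
Proof.
  induction m; simpl; [rewrite Rabs_R0; lra|].
  eapply Rle_trans; [apply Rabs_triang|]. lra.
Qed.
Lemma cont_sum1 m (F : nat -> R -> R) : (forall k, cont (F k)) -> cont (fun y => sum1 m (fun k => F k y)).
Proof.
  intros H. induction m; simpl. apply cont_const. apply cont_plus; auto.
Qed.
Lemma I_sum1 m (F : nat -> R -> R) : (forall k, cont (F k)) ->
  int01 (fun y => sum1 m (fun k => F k y)) = sum1 m (fun k => int01 (F k)).
Proof.
  intros H. induction m; simpl. apply I_const.
  rewrite I_plus; auto. rewrite IHm; auto. apply cont_sum1; auto.
Qed.

Lemma Rpower_pos x y : 0 < Rpower x y.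
Proof. unfold Rpower. apply exp_pos. Qed.

Section Phi.
Variables alpha j : R.
Hypothesis Ha : 0 < alpha.

Definition cj := c_j alpha j.
Definition dphi (t : R) := cj / Rpower t (1 / alpha).

Lemma cj_pos : 0 < cj.
Proof. unfold cj, c_j. apply Rpower_pos. Qed.

Lemma dphi_pos t : 0 < dphi t.
Proof. unfold dphi. apply Rdiv_lt_0_compat. apply cj_pos. apply Rpower_pos. Qed.

Lemma dphi_alt t : dphi t = cj * Rpower t (- (1 / alpha)).
Proof. unfold dphi. rewrite Rpower_Ropp. unfold Rdiv. ring. Qed.

Lemma phi_deriv t : 0 < t -> derivable_pt_lim (phi_alpha alpha j) t (dphi t).
Proof.
  intros Ht. unfold phi_alpha. destruct (Req_dec_T alpha 1) as [E|E].
  - assert (H := derivable_pt_lim_scal ln cj t (/ t) (derivable_pt_lim_ln t Ht)).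
    unfold dphi. replace (1/alpha) with 1 by (rewrite E; field). rewrite Rpower_1 by auto.
    replace (cj / t) with (cj * / t) by (unfold Rdiv; ring).
    unfold mult_real_fct in H. fold cj. exact H.
  - assert (H := derivable_pt_lim_scal _ (cj * alpha / (alpha - 1)) t _
                  (derivable_pt_lim_power t ((alpha - 1) / alpha) Ht)).
    unfold mult_real_fct in H. fold cj.
    replace (dphi t) with (cj * alpha / (alpha - 1) * ((alpha - 1) / alpha * Rpower t ((alpha - 1) / alpha - 1))).
    exact H.
    rewrite dphi_alt.
    replace ((alpha - 1) / alpha - 1) with (- (1/alpha)) by (field; lra).
    field. split; [lra|]. intro; apply E; lra.
Qed.

Lemma dphi_decr u v : 0 < u -> u < v -> dphi v < dphi u.
Proof.
  intros Hu Huv. unfold dphi. apply Rmult_lt_compat_l. apply cj_pos.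
  apply Rinv_lt_contravar. apply Rmult_lt_0_compat; apply Rpower_pos.
  apply Rlt_Rpower_l. apply Rdiv_lt_0_compat; lra. lra.
Qed.

Lemma dphi_decr_le u v : 0 < u -> u <= v -> dphi v <= dphi u.
Proof. intros Hu [H|H]. left; apply dphi_decr; auto. subst; lra. Qed.

Lemma phi_tangent_gen u t : 0 < u -> 0 < t -> u <> t ->
  phi_alpha alpha j u < phi_alpha alpha j t + dphi t * (u - t).
Proof.
  intros Hu Ht Hne. destruct (Rlt_or_le u t) as [Hl|Hl].
  - destruct (MVT_cor2 (phi_alpha alpha j) dphi u t Hl) as [c [Ec Hc]].
    { intros c Hc. apply phi_deriv. lra. }
    assert (dphi t < dphi c) by (apply dphi_decr; lra).
    assert (0 < t - u) by lra. nra.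
  - assert (Hl' : t < u) by lra.
    destruct (MVT_cor2 (phi_alpha alpha j) dphi t u Hl') as [c [Ec Hc]].
    { intros c Hc. apply phi_deriv. lra. }
    assert (dphi c < dphi t) by (apply dphi_decr; lra).
    assert (0 < u - t) by lra. nra.
Qed.

Lemma phi_tangent u t : 0 < u -> 0 < t ->
  phi_alpha alpha j u <= phi_alpha alpha j t + dphi t * (u - t).
Proof.
  intros Hu Ht. destruct (Req_dec u t) as [->|Hne]. lra.
  left; apply phi_tangent_gen; auto.
Qed.

Lemma phi_lip u v e : 0 < e -> e <= u -> e <= v ->
  Rabs (phi_alpha alpha j u - phi_alpha alpha j v) <= dphi e * Rabs (u - v).
Proof.
  intros He Hu Hv.
  assert (T1 := phi_tangent u v ltac:(lra) ltac:(lra)).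
  assert (T2 := phi_tangent v u ltac:(lra) ltac:(lra)).
  assert (D1 := dphi_decr_le e u He Hu). assert (D2 := dphi_decr_le e v He Hv).
  assert (P1 := dphi_pos u). assert (P2 := dphi_pos v).
  destruct (Rle_or_lt v u).
  - rewrite Rabs_pos_eq by nra. rewrite Rabs_pos_eq by lra. nra.
  - rewrite Rabs_left1 by nra. rewrite Rabs_left1 by lra. nra.
Qed.

Lemma phi_cont t : 0 < t -> continuous (phi_alpha alpha j) t.
Proof.
  intros Ht. apply continuity_pt_filterlim. apply derivable_continuous_pt.
  exists (dphi t). apply phi_deriv; auto.
Qed.

Definition ddphi t := cj * (- (1 / alpha) * Rpower t (- (1 / alpha) - 1)).

Lemma dphi_deriv t : 0 < t -> derivable_pt_lim dphi t (ddphi t).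
Proof.
  intros Ht.
  assert (H := derivable_pt_lim_scal _ cj t _ (derivable_pt_lim_power t (- (1 / alpha)) Ht)).
  unfold mult_real_fct in H. unfold ddphi.
  replace dphi with (fun t => cj * Rpower t (- (1 / alpha))). exact H.
  apply functional_extensionality; intros; symmetry; apply dphi_alt.
Qed.

Lemma dphi_cont t : 0 < t -> continuous dphi t.
Proof.
  intros Ht. apply continuity_pt_filterlim. apply derivable_continuous_pt.
  exists (ddphi t). apply dphi_deriv; auto.
Qed.



Definition Ld e := cj * (1 / alpha) * Rpower e (- (1 / alpha) - 1).

Lemma ddphi_bound t e : 0 < e -> e <= t -> Rabs (ddphi t) <= Ld e.
Proof.
  intros He Ht. unfold ddphi, Ld.
  assert (Hc := cj_pos).
  assert (Hq : 0 < 1 / alpha) by (apply Rdiv_lt_0_compat; lra).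
  assert (P1 := Rpower_pos t (- (1 / alpha) - 1)).
  rewrite Rabs_left1.
  2:{ assert (0 <= cj * (1/alpha) * Rpower t (- (1 / alpha) - 1)).
      { apply Rmult_le_pos; [apply Rmult_le_pos|]; lra. } nra. }
  assert (Rpower t (- (1 / alpha) - 1) <= Rpower e (- (1 / alpha) - 1)).
  { replace (- (1 / alpha) - 1) with (- (1/alpha + 1)) by ring.
    rewrite !Rpower_Ropp. apply Rinv_le_contravar. apply Rpower_pos.
    apply Rle_Rpower_l; lra. }
  assert (0 <= cj * (1/alpha)) by (apply Rmult_le_pos; lra).
  nra.
Qed.

Lemma dphi_lip u v e : 0 < e -> e <= u -> e <= v -> Rabs (dphi u - dphi v) <= Ld e * Rabs (u - v).
Proof.
  intros He Hu Hv. destruct (Rtotal_order u v) as [H|[H|H]].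
  - destruct (MVT_cor2 dphi ddphi u v H) as [c [Ec Hc]].
    { intros c Hc. apply dphi_deriv. lra. }
    replace (dphi u - dphi v) with (- (dphi v - dphi u)) by ring.
    rewrite Rabs_Ropp, Ec, Rabs_mult. rewrite (Rabs_minus_sym u v).
    apply Rmult_le_compat_r. apply Rabs_pos. apply ddphi_bound; lra.
  - subst. rewrite !Rminus_diag, Rabs_R0. lra.
  - destruct (MVT_cor2 dphi ddphi v u H) as [c [Ec Hc]].
    { intros c Hc. apply dphi_deriv. lra. }
    rewrite Ec, Rabs_mult.
    apply Rmult_le_compat_r. apply Rabs_pos. apply ddphi_bound; lra.
Qed.

Lemma phi_coercive : exists A, forall t, 0 < t -> phi_alpha alpha j t <= A + t / 2.
Proof.
  set (t0 := Rpower (2 * cj) alpha).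
  assert (Ht0 : 0 < t0) by apply Rpower_pos.
  assert (Hd : dphi t0 = / 2).
  { unfold dphi, t0. rewrite Rpower_mult. replace (alpha * (1 / alpha)) with 1 by (field; lra).
    rewrite Rpower_1. field. generalize cj_pos; lra. generalize cj_pos; lra. }
  exists (phi_alpha alpha j t0). intros t Ht.
  assert (T := phi_tangent t t0 Ht Ht0). rewrite Hd in T.
  destruct (Rle_or_lt t0 t); lra.
Qed.
End Phi.

Lemma exp_le' x y : x <= y -> exp x <= exp y.
Proof. intros [H|H]. left; apply exp_increasing; auto. subst; lra. Qed.

Lemma dphi_sqrt alpha j w : 0 < alpha <= 2 -> 0 < w <= 1 -> cj alpha j / sqrt w <= dphi alpha j w.
Proof.
  intros Ha Hw. unfold dphi. apply Rmult_le_compat_l. left; apply cj_pos.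
  apply Rinv_le_contravar. apply Rpower_pos.
  rewrite <- Rpower_sqrt by lra. unfold Rpower.
  apply exp_le'.
  assert (ln w <= 0).
  { destruct (Req_dec w 1) as [->|Hne]. rewrite ln_1; lra.
    rewrite <- ln_1. left. apply ln_increasing; lra. }
  assert (/2 <= 1/alpha). { unfold Rdiv. rewrite Rmult_1_l. apply Rinv_le_contravar; lra. }
  nra.
Qed.


Definition cosk (k : nat) (y : R) := cos (2 * PI * INR k * y).
Definition sink (k : nat) (y : R) := sin (2 * PI * INR k * y).

Lemma trig_cont n a0 a b : cont (trig n a0 a b).
Proof.
  unfold trig. apply cont_plus. apply cont_const.
  apply (cont_sum1 n (fun k y => a k * cos (2 * PI * INR k * y) + b k * sin (2 * PI * INR k * y))).
  intros k. apply cont_plus; apply cont_scal; [apply cont_cos|apply cont_sin].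
Qed.

Lemma trig_periodic n a0 a b : periodic1 (trig n a0 a b).
Proof.
  intros x. unfold trig. f_equal. apply sum1_ext_in. intros k _.
  replace (2 * PI * INR k * (x + 1)) with (2 * PI * INR k * x + 2 * INR k * PI) by ring.
  rewrite cos_period, sin_period. ring.
Qed.

Lemma trig_ext n a0 a b a0' a' b' : a0 = a0' -> (forall k, (1 <= k <= n)%nat -> a k = a' k /\ b k = b' k) ->
  forall y, trig n a0 a b y = trig n a0' a' b' y.
Proof.
  intros -> H y. unfold trig. f_equal. apply sum1_ext_in. intros k Hk.
  destruct (H k Hk) as [-> ->]. reflexivity.
Qed.

Lemma trig_add n x0 x xb z0 z zb y :
  trig n x0 x xb y + trig n z0 z zb y = trig n (x0 + z0) (fun k => x k + z k) (fun k => xb k + zb k) y.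
Proof.
  unfold trig. replace (x0 + sum1 n (fun k => x k * cos (2 * PI * INR k * y) + xb k * sin (2 * PI * INR k * y)) +
   (z0 + sum1 n (fun k => z k * cos (2 * PI * INR k * y) + zb k * sin (2 * PI * INR k * y))))
   with (x0 + z0 + (sum1 n (fun k => x k * cos (2 * PI * INR k * y) + xb k * sin (2 * PI * INR k * y)) +
   sum1 n (fun k => z k * cos (2 * PI * INR k * y) + zb k * sin (2 * PI * INR k * y)))) by ring.
  rewrite <- sum1_plus. f_equal. apply sum1_ext_in; intros; ring.
Qed.

Lemma trig_scal n s x0 x xb y :
  s * trig n x0 x xb y = trig n (s * x0) (fun k => s * x k) (fun k => s * xb k) y.
Proof.
  unfold trig. rewrite Rmult_plus_distr_l, <- sum1_scal. f_equal. apply sum1_ext_in; intros; ring.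
Qed.

Lemma trig_diff n a0 a b a0' a' b' y :
  trig n a0' a' b' y = trig n a0 a b y + trig n (a0' - a0) (fun k => a' k - a k) (fun k => b' k - b k) y.
Proof.
  rewrite trig_add. apply trig_ext. ring. intros; split; ring.
Qed.

Lemma trig_abs n x0 x xb y : Rabs (trig n x0 x xb y) <= Rabs x0 + sum1 n (fun k => Rabs (x k) + Rabs (xb k)).
Proof.
  unfold trig. eapply Rle_trans. apply Rabs_triang. apply Rplus_le_compat_l.
  eapply Rle_trans. apply sum1_abs. apply sum1_le. intros k _.
  eapply Rle_trans. apply Rabs_triang. rewrite !Rabs_mult.
  assert (H1 := COS_bound (2 * PI * INR k * y)). assert (H2 := SIN_bound (2 * PI * INR k * y)).
  assert (Rabs (cos (2 * PI * INR k * y)) <= 1) by (apply Rabs_le; lra).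
  assert (Rabs (sin (2 * PI * INR k * y)) <= 1) by (apply Rabs_le; lra).
  assert (0 <= Rabs (x k)) by apply Rabs_pos. assert (0 <= Rabs (xb k)) by apply Rabs_pos.
  nra.
Qed.

Lemma I_trig_mul n g h0 ha hb : cont g ->
  int01 (fun y => g y * trig n h0 ha hb y) =
  h0 * int01 g + sum1 n (fun k => ha k * int01 (fun y => g y * cosk k y) + hb k * int01 (fun y => g y * sink k y)).
Proof.
  intros Hg. unfold trig.
  rewrite (I_ext _ (fun y => h0 * g y + sum1 n (fun k => ha k * (g y * cosk k y) + hb k * (g y * sink k y)))).
  2:{ intros y. rewrite Rmult_plus_distr_l, <- sum1_scal. unfold cosk, sink. f_equal. ring.
      apply sum1_ext_in; intros; ring. }
  assert (Hc : forall k, cont (fun y => ha k * (g y * cosk k y) + hb k * (g y * sink k y))).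
  { intros k. apply cont_plus; apply cont_scal; apply cont_mult; auto; [apply cont_cos|apply cont_sin]. }
  rewrite I_plus; [| apply cont_scal; auto | apply (cont_sum1 n (fun k y => _)); auto].
  rewrite I_scal by auto. f_equal.
  rewrite (I_sum1 n (fun k y => ha k * (g y * cosk k y) + hb k * (g y * sink k y))) by auto.
  apply sum1_ext_in. intros k _.
  rewrite I_plus. rewrite !I_scal. reflexivity.
  apply cont_mult; auto; apply cont_sin. apply cont_mult; auto; apply cont_cos.
  apply cont_scal; apply cont_mult; auto; apply cont_cos.
  apply cont_scal; apply cont_mult; auto; apply cont_sin.
Qed.

Lemma I_trig n a0 a b : int01 (trig n a0 a b) = a0.
Proof.
  rewrite (I_ext _ (fun y => 1 * trig n a0 a b y)) by (intros; ring).
  rewrite I_trig_mul by apply cont_const. rewrite I_const.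
  rewrite (sum1_ext_in _ _ (fun _ => 0)). rewrite sum1_const. ring.
  intros k Hk. rewrite (I_ext (fun y => 1 * cosk k y) (fun y => cos (2 * PI * INR k * y))) by (intros; unfold cosk; ring).
  rewrite (I_ext (fun y => 1 * sink k y) (fun y => sin (2 * PI * INR k * y))) by (intros; unfold sink; ring).
  rewrite I_cos, I_sin by lia. ring.
Qed.

Lemma sum1_S m f : sum1 (S m) f = sum1 m f + f (S m).
Proof. reflexivity. Qed.

Lemma sum1_single n f k : (1 <= k <= n)%nat ->
  sum1 n (fun i => if Nat.eq_dec i k then f i else 0) = f k.
Proof.
  induction n; intros Hk; [lia|]. rewrite sum1_S.
  destruct (Nat.eq_dec (S n) k) as [E|E].
  - subst. rewrite (sum1_ext_in _ _ (fun _ => 0)). rewrite sum1_const. ring.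
    intros i Hi. destruct (Nat.eq_dec i (S n)); [lia|auto].
  - rewrite IHn by lia. ring.
Qed.

Lemma trig_e0 n y : trig n 1 (fun _ => 0) (fun _ => 0) y = 1.
Proof.
  unfold trig. rewrite (sum1_ext_in _ _ (fun _ => 0)). rewrite sum1_const. ring.
  intros; ring.
Qed.

Lemma trig_ea n k y : (1 <= k <= n)%nat ->
  trig n 0 (fun i => if Nat.eq_dec i k then 1 else 0) (fun _ => 0) y = cosk k y.
Proof.
  intros Hk. unfold trig.
  rewrite (sum1_ext_in _ _ (fun i => if Nat.eq_dec i k then cosk i y else 0)).
  rewrite sum1_single; auto. ring.
  intros i _. unfold cosk. destruct (Nat.eq_dec i k); ring.
Qed.

Lemma trig_eb n k y : (1 <= k <= n)%nat ->
  trig n 0 (fun _ => 0) (fun i => if Nat.eq_dec i k then 1 else 0) y = sink k y.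
Proof.
  intros Hk. unfold trig.
  rewrite (sum1_ext_in _ _ (fun i => if Nat.eq_dec i k then sink i y else 0)).
  rewrite sum1_single; auto. ring.
  intros i _. unfold sink. destruct (Nat.eq_dec i k); ring.
Qed.

Lemma is_derive_sum1 n (F F' : nat -> R -> R) y :
  (forall k, is_derive (F k) y (F' k y)) ->
  is_derive (fun y => sum1 n (fun k => F k y)) y (sum1 n (fun k => F' k y)).
Proof.
  intros H. induction n; simpl.
  - apply (@is_derive_const R_AbsRing R_NormedModule).
  - apply (@is_derive_plus R_AbsRing R_NormedModule); auto.
Qed.

Definition trig1 n (a b : nat -> R) y :=
  sum1 n (fun k => 2 * PI * INR k * (b k * cos (2 * PI * INR k * y) - a k * sin (2 * PI * INR k * y))).
Definition trig2 n (a b : nat -> R) y :=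
  sum1 n (fun k => - (2 * PI * INR k) ^ 2 * (a k * cos (2 * PI * INR k * y) + b k * sin (2 * PI * INR k * y))).

Lemma trig_deriv n a0 a b y : derivable_pt_lim (trig n a0 a b) y (trig1 n a b y).
Proof.
  apply is_derive_Reals. unfold trig, trig1.
  replace (sum1 n (fun k => 2 * PI * INR k * (b k * cos (2 * PI * INR k * y) - a k * sin (2 * PI * INR k * y))))
    with (0 + sum1 n (fun k => 2 * PI * INR k * (b k * cos (2 * PI * INR k * y) - a k * sin (2 * PI * INR k * y)))) by ring.
  apply (@is_derive_plus R_AbsRing R_NormedModule).
  apply (@is_derive_const R_AbsRing R_NormedModule).
  apply (is_derive_sum1 n (fun k y => a k * cos (2 * PI * INR k * y) + b k * sin (2 * PI * INR k * y))
     (fun k y => 2 * PI * INR k * (b k * cos (2 * PI * INR k * y) - a k * sin (2 * PI * INR k * y)))).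
  intros k. auto_derive; auto. ring.
Qed.

Lemma trig1_deriv n a b y : derivable_pt_lim (trig1 n a b) y (trig2 n a b y).
Proof.
  apply is_derive_Reals. unfold trig1, trig2.
  apply (is_derive_sum1 n (fun k y => 2 * PI * INR k * (b k * cos (2 * PI * INR k * y) - a k * sin (2 * PI * INR k * y)))
     (fun k y => - (2 * PI * INR k) ^ 2 * (a k * cos (2 * PI * INR k * y) + b k * sin (2 * PI * INR k * y)))).
  intros k. auto_derive; auto. ring.
Qed.

Lemma trig2_bound n a b y : Rabs (trig2 n a b y) <= sum1 n (fun k => (2 * PI * INR k) ^ 2 * (Rabs (a k) + Rabs (b k))).
Proof.
  unfold trig2. eapply Rle_trans. apply sum1_abs. apply sum1_le. intros k _.
  rewrite Rabs_mult, Rabs_Ropp, Rabs_pos_eq by (apply pow2_ge_0).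
  apply Rmult_le_compat_l. apply pow2_ge_0.
  eapply Rle_trans. apply Rabs_triang. rewrite !Rabs_mult.
  assert (H1 := COS_bound (2 * PI * INR k * y)). assert (H2 := SIN_bound (2 * PI * INR k * y)).
  assert (Rabs (cos (2 * PI * INR k * y)) <= 1) by (apply Rabs_le; lra).
  assert (Rabs (sin (2 * PI * INR k * y)) <= 1) by (apply Rabs_le; lra).
  assert (0 <= Rabs (a k)) by apply Rabs_pos. assert (0 <= Rabs (b k)) by apply Rabs_pos.
  nra.
Qed.

Lemma exR g a b : cont g -> ex_RInt g a b.
Proof. intros Hg. apply (@ex_RInt_continuous R_CompleteNormedModule). intros; apply Hg. Qed.

Lemma RInt_sub g a b : cont g -> 0 <= a <= b -> b <= 1 -> (forall y, 0 <= y <= 1 -> 0 <= g y) ->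
  RInt g a b <= int01 g.
Proof.
  intros Hg Ha Hb Hpos. rewrite int01_RInt by auto.
  rewrite <- (@RInt_Chasles R_CompleteNormedModule g 0 a 1) by (apply exR; auto).
  rewrite <- (@RInt_Chasles R_CompleteNormedModule g a b 1) by (apply exR; auto).
  assert (0 <= RInt g 0 a) by (apply RInt_ge_0; [lra| apply exR; auto| intros; apply Hpos; lra]).
  assert (0 <= RInt g b 1) by (apply RInt_ge_0; [lra| apply exR; auto| intros; apply Hpos; lra]).
  unfold plus; simpl. lra.
Qed.

Lemma log_int g y0 h c e S : 0 < S -> 0 < e -> 0 < h -> 0 <= c -> 0 <= y0 <= 1 -> h <= 1/2 -> cont g ->
  (forall y, 0 <= y <= 1 -> 0 <= g y) ->
  (forall y, 0 <= y <= 1 -> Rabs (y - y0) <= h -> c / (e + S * Rabs (y - y0)) <= g y) ->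
  c / S * ln (1 + S * h / e) <= int01 g.
Proof.
  intros HS He Hh Hc Hy0 Hh2 Hg Hpos Hlow.
  assert (Hval : c / S * ln (1 + S * h / e) = c / S * ln (e + S * h) - c / S * ln e).
  { replace (1 + S * h / e) with ((e + S * h) / e) by (field; lra).
    rewrite ln_div by nra. ring. }
  destruct (Rle_or_lt y0 (1/2)) as [Hl|Hl].
  - set (F := fun y => c / S * ln (e + S * (y - y0))).
    set (f := fun y => c / (e + S * (y - y0))).
    assert (Hd : forall x, Rmin y0 (y0 + h) <= x <= Rmax y0 (y0 + h) -> is_derive F x (f x)).
    { intros x Hx. rewrite Rmin_left in Hx by lra. rewrite Rmax_right in Hx by lra.
      unfold F, f. auto_derive. nra. field. split; nra. }
    assert (Hcf : forall x, Rmin y0 (y0 + h) <= x <= Rmax y0 (y0 + h) -> continuous f x).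
    { intros x Hx. rewrite Rmin_left in Hx by lra. rewrite Rmax_right in Hx by lra.
      apply (@ex_derive_continuous R_AbsRing R_NormedModule). unfold f. auto_derive. nra. }
    assert (HI := @is_RInt_derive R_CompleteNormedModule F f y0 (y0 + h) Hd Hcf).
    apply Rle_trans with (RInt g y0 (y0 + h)); [| apply RInt_sub; auto; lra].
    apply Rle_trans with (RInt f y0 (y0 + h)).
    + rewrite (is_RInt_unique _ _ _ _ HI). unfold F, minus, plus, opp; simpl.
      replace (y0 + h - y0) with h by ring. replace (y0 - y0) with 0 by ring.
      rewrite Rmult_0_r, Rplus_0_r. lra.
    + apply RInt_le. lra. eexists; eauto. apply exR; auto.
      intros x Hx. unfold f. specialize (Hlow x ltac:(lra)).
      rewrite Rabs_pos_eq in Hlow by lra. apply Hlow. lra.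
  - set (F := fun y => - (c / S * ln (e + S * (y0 - y)))).
    set (f := fun y => c / (e + S * (y0 - y))).
    assert (Hd : forall x, Rmin (y0 - h) y0 <= x <= Rmax (y0 - h) y0 -> is_derive F x (f x)).
    { intros x Hx. rewrite Rmin_left in Hx by lra. rewrite Rmax_right in Hx by lra.
      unfold F, f. auto_derive. nra. field. split; nra. }
    assert (Hcf : forall x, Rmin (y0 - h) y0 <= x <= Rmax (y0 - h) y0 -> continuous f x).
    { intros x Hx. rewrite Rmin_left in Hx by lra. rewrite Rmax_right in Hx by lra.
      apply (@ex_derive_continuous R_AbsRing R_NormedModule). unfold f. auto_derive. nra. }
    assert (HI := @is_RInt_derive R_CompleteNormedModule F f (y0 - h) y0 Hd Hcf).
    apply Rle_trans with (RInt g (y0 - h) y0); [| apply RInt_sub; auto; lra].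
    apply Rle_trans with (RInt f (y0 - h) y0).
    + rewrite (is_RInt_unique _ _ _ _ HI). unfold F, minus, plus, opp; simpl.
      replace (y0 - (y0 - h)) with h by ring. replace (y0 - y0) with 0 by ring.
      rewrite Rmult_0_r, Rplus_0_r. lra.
    + apply RInt_le. lra. eexists; eauto. apply exR; auto.
      intros x Hx. unfold f. specialize (Hlow x ltac:(lra)).
      rewrite Rabs_left1 in Hlow by lra. replace (- (x - y0)) with (y0 - x) in Hlow by ring.
      apply Hlow. lra.
Qed.

Lemma sqrt_plus_le x y : 0 <= x -> 0 <= y -> sqrt (x + y) <= sqrt x + sqrt y.
Proof.
  intros Hx Hy. assert (H1 := sqrt_pos x). assert (H2 := sqrt_pos y).
  apply Rsqr_incr_0_var. unfold Rsqr. rewrite sqrt_sqrt by lra.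
  replace ((sqrt x + sqrt y) * (sqrt x + sqrt y)) with (sqrt x * sqrt x + sqrt y * sqrt y + 2 * sqrt x * sqrt y) by ring.
  rewrite !sqrt_sqrt by lra. nra. lra.
Qed.

Lemma per_nat f : periodic1 f -> forall y k, f (y + INR k) = f y.
Proof.
  intros Hf y k. induction k. simpl. rewrite Rplus_0_r; auto.
  rewrite S_INR. replace (y + (INR k + 1)) with ((y + INR k) + 1) by ring. rewrite Hf; auto.
Qed.

Lemma per_reduce f : periodic1 f -> forall y, exists z, 0 <= z <= 1 /\ f y = f z.
Proof.
  intros Hf y. destruct (archimed y) as [H1 H2].
  set (m := (up y - 1)%Z).
  exists (y - IZR m). split. unfold m. rewrite minus_IZR. simpl. lra.
  destruct (Z_le_gt_dec 0 m) as [Hm|Hm].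
  - destruct (IZN m Hm) as [k Hk]. rewrite Hk, <- INR_IZR_INZ.
    rewrite <- (per_nat f Hf (y - INR k) k). f_equal; ring.
  - assert (Hm' : (0 <= - m)%Z) by lia. destruct (IZN (- m) Hm') as [k Hk].
    replace (IZR m) with (- INR k). rewrite <- (per_nat f Hf y k). f_equal; ring.
    rewrite INR_IZR_INZ, <- Hk, opp_IZR. ring.
Qed.

Lemma small_lemma z C s0 : 0 < s0 -> (forall s, 0 < s <= s0 -> z <= C * s) -> z <= 0.
Proof.
  intros Hs0 H. destruct (Rle_or_lt z 0) as [|Hz]; auto.
  set (s := Rmin s0 (z / (2 * (Rabs C + 1)))).
  assert (Hc : 0 < Rabs C + 1) by (generalize (Rabs_pos C); lra).
  assert (Hs : 0 < s). { unfold s. apply Rmin_pos; auto. apply Rdiv_lt_0_compat; lra. }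
  assert (Hs1 : s <= z / (2 * (Rabs C + 1))) by apply Rmin_r.
  assert (Hs2 : s <= s0) by apply Rmin_l.
  specialize (H s (conj Hs Hs2)).
  assert (C * s <= Rabs C * s) by (apply Rmult_le_compat_r; [lra| apply Rle_abs]).
  assert (s * (2 * (Rabs C + 1)) <= z).
  { apply (Rmult_le_compat_r (2 * (Rabs C + 1))) in Hs1; [|lra].
    unfold Rdiv in Hs1. rewrite Rmult_assoc, Rinv_l in Hs1 by lra. lra. }
  nra.
Qed.

Lemma abs_le_inv x c : Rabs x <= c -> - c <= x <= c.
Proof. unfold Rabs; destruct (Rcase_abs x); lra. Qed.
Lemma neg_abs_le z : - Rabs z <= z.
Proof. unfold Rabs; destruct (Rcase_abs z); lra. Qed.

Lemma Rpower_inv x z : 0 < x -> Rpower (/ x) z = / Rpower x z.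
Proof. intros Hx. unfold Rpower. rewrite ln_Rinv by auto. rewrite <- exp_Ropp. f_equal. ring. Qed.

Lemma Rpower_div x y z : 0 < x -> 0 < y -> Rpower (x / y) z = Rpower x z / Rpower y z.
Proof.
  intros Hx Hy. unfold Rdiv. rewrite <- Rpower_mult_distr; auto.
  rewrite Rpower_inv; auto. apply Rinv_0_lt_compat; auto.
Qed.

Lemma Rpower_invol x a : 0 < x -> a <> 0 -> Rpower (Rpower x (1 / a)) a = x.
Proof. intros Hx Ha. rewrite Rpower_mult. replace (1 / a * a) with 1 by (field; auto). apply Rpower_1; auto. Qed.

Lemma Rpower_invol' x a : 0 < x -> a <> 0 -> Rpower (Rpower x a) (1 / a) = x.
Proof. intros Hx Ha. rewrite Rpower_mult. replace (a * (1 / a)) with 1 by (field; auto). apply Rpower_1; auto. Qed.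

Section Main.
Variables (alpha j : R) (V : R -> R) (n : nat) (p : nat -> R).
Hypothesis Ha : 0 < alpha <= 2.
Hypothesis HV : C2_T V.
Hypothesis Hp : forall k, (1 <= k <= n)%nat -> p k > 0.

Let phi := phi_alpha alpha j.
Let dp := dphi alpha j.
Definition tt a0 a b y := trig n a0 a b y - V y.
Definition Qf (a b : nat -> R) := sum1 n (fun k => / (2 * p k) * (a k ^ 2 + b k ^ 2)).

Lemma Ha0 : 0 < alpha. Proof. lra. Qed.

Lemma V_cont : cont V.
Proof.
  destruct HV as [_ [f1 [f2 [H1 _]]]]. intros x. apply continuity_pt_filterlim.
  apply derivable_continuous_pt. exists (f1 x). apply H1.
Qed.

Lemma V_per : periodic1 V.
Proof. destruct HV; auto. Qed.

Lemma tt_cont a0 a b : cont (tt a0 a b).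
Proof. apply cont_minus. apply trig_cont. apply V_cont. Qed.

Lemma tt_per a0 a b : periodic1 (tt a0 a b).
Proof. intros x. unfold tt. rewrite trig_periodic, V_per. reflexivity. Qed.

Lemma tt_min a0 a b : exists y0, 0 <= y0 <= 1 /\ forall y, tt a0 a b y0 <= tt a0 a b y.
Proof.
  destruct (continuity_ab_min (tt a0 a b) 0 1) as [m [Hm Hm01]]. lra.
  intros; apply cont_ct, tt_cont.
  exists m. split; auto. intros y. destruct (per_reduce _ (tt_per a0 a b) y) as [z [Hz ->]]. auto.
Qed.

Lemma phi_tt_cont a0 a b : inC n V a0 a b -> cont (fun y => phi (tt a0 a b y)).
Proof.
  intros HC x. apply (continuous_comp (tt a0 a b) phi). apply tt_cont.
  apply (phi_cont alpha j Ha0). apply HC.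
Qed.

Lemma dp_tt_cont a0 a b : inC n V a0 a b -> cont (fun y => dp (tt a0 a b y)).
Proof.
  intros HC x. apply (continuous_comp (tt a0 a b) dp). apply tt_cont.
  apply (dphi_cont alpha j). apply HC.
Qed.

Lemma Jfun_eq a0 a b : Jfun alpha j n V p a0 a b = int01 (fun y => phi (tt a0 a b y)) - a0 - Qf a b.
Proof. reflexivity. Qed.

Definition EL a0 a b := forall h0 ha hb,
  int01 (fun y => dp (tt a0 a b y) * trig n h0 ha hb y) = h0 + sum1 n (fun k => (a k * ha k + b k * hb k) / p k).

Lemma trig_zero n' c y : trig n' c (fun _ => 0) (fun _ => 0) y = c.
Proof.
  unfold trig. rewrite (sum1_ext_in _ _ (fun _ => 0)). rewrite sum1_const. ring. intros; ring.
Qed.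

Lemma GI a0 a b a0' a' b' : inC n V a0 a b -> EL a0 a b -> inC n V a0' a' b' ->
  Jfun alpha j n V p a0' a' b' <= Jfun alpha j n V p a0 a b /\
  (Jfun alpha j n V p a0 a b <= Jfun alpha j n V p a0' a' b' -> coef_eq n a0' a' b' a0 a b).
Proof.
  intros HC HE HC'.
  set (t := tt a0 a b). set (t' := tt a0' a' b').
  set (d := trig n (a0' - a0) (fun k => a' k - a k) (fun k => b' k - b k)).
  assert (Hd : forall y, t' y - t y = d y).
  { intros y. unfold t, t', tt, d. rewrite (trig_diff n a0 a b a0' a' b'). ring. }
  assert (Cd : cont d) by apply trig_cont.
  assert (Ct := phi_tt_cont _ _ _ HC). assert (Ct' := phi_tt_cont _ _ _ HC').
  assert (Cdp := dp_tt_cont _ _ _ HC).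
  set (e := fun y => phi (t' y) - phi (t y) - dp (t y) * d y).
  assert (Ce : cont e). { unfold e. apply cont_minus. apply cont_minus; auto. apply cont_mult; auto. }
  assert (He : forall y, e y <= 0).
  { intros y. unfold e. rewrite <- Hd. assert (T := phi_tangent alpha j Ha0 (t' y) (t y) (HC' y) (HC y)).
    unfold phi, dp. lra. }
  set (D := int01 e).
  assert (HD : D <= 0). { unfold D. rewrite <- (I_const 0). apply I_le; auto using cont_const. }
  assert (HX := HE (a0' - a0) (fun k => a' k - a k) (fun k => b' k - b k)).
  fold d in HX.
  assert (HPhi : int01 (fun y => phi (t' y)) - int01 (fun y => phi (t y)) = D + int01 (fun y => dp (t y) * d y)).
  { unfold D. rewrite <- I_minus, <- I_plus; auto. apply I_ext. intros y. unfold e. ring. apply cont_mult; auto. }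
  set (S := sum1 n (fun k => / (2 * p k) * ((a' k - a k) ^ 2 + (b' k - b k) ^ 2))).
  assert (HS0 : 0 <= S).
  { apply sum1_ge0. intros k Hk. specialize (Hp k Hk). apply Rmult_le_pos.
    left; apply Rinv_0_lt_compat; lra. apply Rplus_le_le_0_compat; apply pow2_ge_0. }
  assert (HQ : Qf a' b' - Qf a b - sum1 n (fun k => (a k * (a' k - a k) + b k * (b' k - b k)) / p k) = S).
  { unfold Qf, S. rewrite <- !sum1_minus. apply sum1_ext_in. intros k Hk. specialize (Hp k Hk). field. lra. }
  assert (HJ : Jfun alpha j n V p a0' a' b' - Jfun alpha j n V p a0 a b = D - S).
  { rewrite !Jfun_eq. fold t t'. fold t in HX. rewrite HX in HPhi. simpl in HPhi. lra. }
  split. lra.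
  intros HJle.
  assert (HS : S = 0) by lra. assert (HD0 : D = 0) by lra.
  assert (Hab : forall k, (1 <= k <= n)%nat -> a' k = a k /\ b' k = b k).
  { intros k Hk. assert (T := sum1_term n (fun k => / (2 * p k) * ((a' k - a k) ^ 2 + (b' k - b k) ^ 2)) k).
    simpl in T. fold S in T. assert (Hpk := Hp k Hk).
    assert (T' : / (2 * p k) * ((a' k - a k) ^ 2 + (b' k - b k) ^ 2) <= 0).
    { rewrite <- HS. apply T; auto. intros i Hi. specialize (Hp i Hi). apply Rmult_le_pos.
      left; apply Rinv_0_lt_compat; lra. apply Rplus_le_le_0_compat; apply pow2_ge_0. }
    assert (0 < / (2 * p k)) by (apply Rinv_0_lt_compat; lra).
    assert ((a' k - a k) ^ 2 + (b' k - b k) ^ 2 <= 0) by nra.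
    assert (Ha2 := pow2_ge_0 (a' k - a k)); assert (Hb2 := pow2_ge_0 (b' k - b k)).
    assert (E1 : (a' k - a k) ^ 2 = 0) by lra. assert (E2 : (b' k - b k) ^ 2 = 0) by lra.
    split; apply Rminus_diag_uniq; apply NNPP; intro NE; eapply pow_nonzero; eauto. }
  split; [|exact Hab].
  destruct (Req_dec a0' a0) as [|Hne]; auto. exfalso.
  assert (Hdc : forall y, d y = a0' - a0).
  { intros y. unfold d. transitivity (trig n (a0' - a0) (fun _ => 0) (fun _ => 0) y); [|apply trig_zero].
    apply trig_ext; auto. intros k Hk. destruct (Hab k Hk) as [-> ->]. split; ring. }
  assert (Hneg : 0 < int01 (fun y => - e y)).
  { apply I_pos_strict. intros x; apply (continuous_opp e); auto.
    intros y _. unfold e.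
    assert (NE : t' y <> t y) by (intro E; specialize (Hd y); specialize (Hdc y); lra).
    assert (T := phi_tangent_gen alpha j Ha0 (t' y) (t y) (HC' y) (HC y) NE).
    rewrite <- Hd. unfold phi, dp. lra. }
  rewrite I_opp in Hneg by auto. fold D in Hneg. lra.
Qed.

Lemma Qf_shift a b ha hb s :
  Qf (fun k => a k + s * ha k) (fun k => b k + s * hb k) =
  Qf a b + s * sum1 n (fun k => (a k * ha k + b k * hb k) / p k) + s ^ 2 * Qf ha hb.
Proof.
  unfold Qf. rewrite <- !sum1_scal, <- !sum1_plus. apply sum1_ext_in. intros k Hk.
  specialize (Hp k Hk). field. lra.
Qed.

Lemma Ld_nonneg e : 0 <= Ld alpha j e.
Proof.
  unfold Ld. apply Rmult_le_pos. apply Rmult_le_pos. left; apply cj_pos.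
  left; apply Rdiv_lt_0_compat; lra. left; apply Rpower_pos.
Qed.

Lemma tt_shift a0 a b h0 ha hb s y :
  tt (a0 + s * h0) (fun k => a k + s * ha k) (fun k => b k + s * hb k) y = tt a0 a b y + s * trig n h0 ha hb y.
Proof.
  unfold tt. rewrite trig_scal. 
  replace (trig n a0 a b y - V y + trig n (s * h0) (fun k => s * ha k) (fun k => s * hb k) y)
    with (trig n a0 a b y + trig n (s * h0) (fun k => s * ha k) (fun k => s * hb k) y - V y) by ring.
  rewrite trig_add. reflexivity.
Qed.

Lemma EL_of_max a0 a b eps : 0 < eps -> (forall y, eps <= tt a0 a b y) ->
  (forall a0' a' b', inC n V a0' a' b' -> Jfun alpha j n V p a0' a' b' <= Jfun alpha j n V p a0 a b) ->
  EL a0 a b.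
Proof.
  intros He Ht Hmax h0 ha hb.
  assert (HC : inC n V a0 a b). { intros y. specialize (Ht y). unfold tt in Ht. lra. }
  set (w := trig n h0 ha hb).
  set (W := Rabs h0 + sum1 n (fun k => Rabs (ha k) + Rabs (hb k)) + 1).
  assert (HW1 : 1 <= W).
  { unfold W. assert (0 <= sum1 n (fun k => Rabs (ha k) + Rabs (hb k))).
    { apply sum1_ge0. intros. generalize (Rabs_pos (ha k)) (Rabs_pos (hb k)); lra. }
    generalize (Rabs_pos h0); lra. }
  assert (Hw : forall y, Rabs (w y) <= W). { intros y. unfold w, W. generalize (trig_abs n h0 ha hb y); lra. }
  set (t := tt a0 a b).
  set (X := int01 (fun y => dp (t y) * w y)).
  set (G := h0 + sum1 n (fun k => (a k * ha k + b k * hb k) / p k)).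
  set (ld := Ld alpha j (eps / 2)).
  assert (Hld := Ld_nonneg (eps / 2)). fold ld in Hld.
  set (K := ld * W ^ 2 + Qf ha hb).
  set (s0 := eps / (2 * W)).
  assert (Hs0 : 0 < s0) by (unfold s0; apply Rdiv_lt_0_compat; lra).
  assert (Key : forall s, Rabs s <= s0 -> s * (X - G) <= K * s ^ 2).
  { intros s Hs.
    set (a0s := a0 + s * h0). set (as_ := fun k => a k + s * ha k). set (bs := fun k => b k + s * hb k).
    assert (Hts : forall y, tt a0s as_ bs y = t y + s * w y) by (intros; apply tt_shift).
    assert (Hsw : forall y, Rabs (s * w y) <= eps / 2).
    { intros y. rewrite Rabs_mult. apply Rle_trans with (s0 * W).
      apply Rmult_le_compat; auto using Rabs_pos. unfold s0. right; field; lra. }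
    assert (Hts2 : forall y, eps / 2 <= tt a0s as_ bs y).
    { intros y. rewrite Hts. specialize (Ht y). fold t in Ht. specialize (Hsw y).
      apply abs_le_inv in Hsw. lra. }
    assert (HCs : inC n V a0s as_ bs). { intros y. specialize (Hts2 y). unfold tt in Hts2. lra. }
    assert (HJ := Hmax _ _ _ HCs). rewrite !Jfun_eq in HJ.
    unfold as_, bs in HJ. rewrite Qf_shift in HJ. fold as_ bs in HJ.
    assert (Hpt : forall y, s * (dp (t y) * w y) - ld * W ^ 2 * s ^ 2 <= phi (tt a0s as_ bs y) - phi (t y)).
    { intros y. rewrite Hts.
      assert (P1 : 0 < t y) by (unfold t; specialize (Ht y); lra).
      assert (P2 : 0 < t y + s * w y) by (rewrite <- Hts; specialize (Hts2 y); lra).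
      assert (T := phi_tangent alpha j Ha0 (t y) (t y + s * w y) P1 P2).
      assert (L := dphi_lip alpha j Ha0 (t y + s * w y) (t y) (eps / 2) ltac:(lra)
                     ltac:(rewrite <- Hts; apply Hts2) ltac:(specialize (Ht y); unfold t; lra)).
      fold ld in L. fold dp in T, L. unfold phi.
      replace (t y + s * w y - t y) with (s * w y) in L by ring.
      set (u := s * w y) in *.
      set (D := dp (t y + u) - dp (t y)) in *.
      assert (H1 : - (Rabs D * Rabs u) <= D * u) by (rewrite <- Rabs_mult; apply neg_abs_le).
      assert (Hu : Rabs u <= Rabs s * W) by (unfold u; rewrite Rabs_mult; apply Rmult_le_compat_l; auto using Rabs_pos).
      assert (H2 : Rabs D * Rabs u <= ld * (Rabs s * W) ^ 2).
      { apply Rle_trans with (ld * Rabs u * Rabs u). apply Rmult_le_compat_r; auto using Rabs_pos.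
        assert (0 <= Rabs u) by apply Rabs_pos. assert (0 <= ld * Rabs u) by (apply Rmult_le_pos; auto).
        apply Rle_trans with (ld * Rabs u * (Rabs s * W)). apply Rmult_le_compat_l; auto.
        replace (ld * (Rabs s * W) ^ 2) with (ld * (Rabs s * W) * (Rabs s * W)) by ring.
        apply Rmult_le_compat_r. apply Rmult_le_pos; auto using Rabs_pos; lra.
        apply Rmult_le_compat_l; auto. }
      replace ((Rabs s * W) ^ 2) with (W ^ 2 * s ^ 2) in H2 by (rewrite Rpow_mult_distr, pow2_abs; ring).
      assert (E : s * (dp (t y) * w y) = dp (t y) * u) by (unfold u; ring).
      replace (t y - (t y + u)) with (- u) in T by ring.
      assert (E2 : D * u = dp (t y + u) * u - dp (t y) * u) by (unfold D; ring).
      rewrite E. lra. }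
    assert (Cs := phi_tt_cont _ _ _ HCs). assert (C0 := phi_tt_cont _ _ _ HC).
    assert (Cdw : cont (fun y => dp (t y) * w y)).
    { apply cont_mult. apply dp_tt_cont; auto. apply trig_cont. }
    assert (HI : s * X - ld * W ^ 2 * s ^ 2 <= int01 (fun y => phi (tt a0s as_ bs y)) - int01 (fun y => phi (t y))).
    { rewrite <- I_minus by auto. unfold X. rewrite <- I_scal by auto. rewrite <- (I_const (ld * W ^ 2 * s ^ 2)).
      rewrite <- I_minus by (auto using cont_const, cont_scal).
      apply I_le. apply cont_minus; auto using cont_const, cont_scal. apply cont_minus; auto.
      intros y _. apply Hpt. }
    fold t in HJ.
    assert (E1 : s * (X - G) = s * X - s * h0 - s * sum1 n (fun k => (a k * ha k + b k * hb k) / p k)) by (unfold G; ring).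
    assert (E2 : K * s ^ 2 = ld * W ^ 2 * s ^ 2 + s ^ 2 * Qf ha hb) by (unfold K; ring).
    fold a0s in HJ. assert (Ea : a0s = a0 + s * h0) by reflexivity. lra. }
  assert (H1 : X - G <= 0).
  { apply (small_lemma _ K s0 Hs0). intros s [Hs Hs'].
    assert (Hk := Key s ltac:(rewrite Rabs_pos_eq; lra)).
    apply (Rmult_le_reg_l s); auto. replace (s * (K * s)) with (K * s ^ 2) by ring. exact Hk. }
  assert (H2 : G - X <= 0).
  { apply (small_lemma _ K s0 Hs0). intros s [Hs Hs'].
    assert (Hk := Key (- s) ltac:(rewrite Rabs_Ropp, Rabs_pos_eq; lra)).
    apply (Rmult_le_reg_l s); auto. replace (s * (K * s)) with (K * (- s) ^ 2) by ring.
    replace (s * (G - X)) with (- s * (X - G)) by ring. exact Hk. }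
  fold w t. fold X G. lra.
Qed.

Lemma taylor R' : 0 <= R' -> exists M, 1 <= M /\ forall a0 a b,
  (forall k, (1 <= k <= n)%nat -> Rabs (a k) <= R' /\ Rabs (b k) <= R') ->
  forall y0, 0 <= y0 <= 1 -> (forall y, tt a0 a b y0 <= tt a0 a b y) ->
  forall y, 0 <= y <= 1 -> tt a0 a b y <= tt a0 a b y0 + M * (y - y0) ^ 2.
Proof.
  intros HR. destruct HV as [Vp [f1 [f2 [H1 [H2 H3]]]]].
  destruct (continuity_ab_maj (fun x => Rabs (f2 x)) 0 1) as [xm [Hxm _]]. lra.
  { intros c _. apply (continuity_pt_comp f2 Rabs). apply H3. apply Rcontinuity_abs. }
  set (MV := Rabs (f2 xm)).
  set (MT := sum1 n (fun k => (2 * PI * INR k) ^ 2 * (2 * R'))).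
  assert (HMT : 0 <= MT). { apply sum1_ge0. intros. apply Rmult_le_pos. apply pow2_ge_0. lra. }
  assert (HMV : 0 <= MV) by apply Rabs_pos.
  exists (MT + MV + 1). split. lra.
  intros a0 a b Hab y0 Hy0 Hmin y Hy.
  set (t1 := fun y => trig1 n a b y - f1 y). set (t2 := fun y => trig2 n a b y - f2 y).
  assert (Ht : forall y, derivable_pt_lim (tt a0 a b) y (t1 y)).
  { intros z. apply (derivable_pt_lim_minus (trig n a0 a b) V). apply trig_deriv. apply H1. }
  assert (Ht1 : forall y, derivable_pt_lim t1 y (t2 y)).
  { intros z. apply (derivable_pt_lim_minus (trig1 n a b) f1). apply trig1_deriv. apply H2. }
  assert (Hb2 : forall z, 0 <= z <= 1 -> Rabs (t2 z) <= MT + MV + 1).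
  { intros z Hz. unfold t2. unfold Rminus. eapply Rle_trans. apply Rabs_triang. rewrite Rabs_Ropp.
    assert (Rabs (f2 z) <= MV) by (apply Hxm; lra).
    assert (Rabs (trig2 n a b z) <= MT).
    { eapply Rle_trans. apply trig2_bound. apply sum1_le. intros k Hk.
      apply Rmult_le_compat_l. apply pow2_ge_0. destruct (Hab k Hk); lra. }
    lra. }
  set (M := MT + MV + 1) in *.
  assert (Hz0 : t1 y0 = 0).
  { assert (pr : derivable_pt (tt a0 a b) y0) by (exists (t1 y0); apply Ht).
    assert (E := deriv_minimum (tt a0 a b) (y0 - 1) (y0 + 1) y0 (exist _ (t1 y0) (Ht y0))
                  ltac:(lra) ltac:(lra) ltac:(intros; apply Hmin)).
    exact E. }
  assert (Hd1 : forall z, 0 <= z <= 1 -> Rabs (t1 z) <= M * Rabs (z - y0)).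
  { intros z Hz. destruct (Rtotal_order z y0) as [Hl|[He|Hl]].
    - destruct (MVT_cor2 t1 t2 z y0 Hl (fun c _ => Ht1 c)) as [xi [Exi Hxi]].
      rewrite Hz0 in Exi. replace (t1 z) with (- (t2 xi * (y0 - z))) by lra.
      rewrite Rabs_Ropp, Rabs_mult, (Rabs_pos_eq (y0 - z)) by lra. rewrite (Rabs_left1 (z - y0)) by lra.
      replace (- (z - y0)) with (y0 - z) by ring. apply Rmult_le_compat_r. lra. apply Hb2; lra.
    - subst. rewrite Hz0, Rminus_diag, Rabs_R0. lra.
    - destruct (MVT_cor2 t1 t2 y0 z Hl (fun c _ => Ht1 c)) as [xi [Exi Hxi]].
      rewrite Hz0 in Exi. replace (t1 z) with (t2 xi * (z - y0)) by lra.
      rewrite Rabs_mult, (Rabs_pos_eq (z - y0)) by lra.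
      apply Rmult_le_compat_r. lra. apply Hb2; lra. }
  assert (HM0 : 0 <= M) by (unfold M; lra).
  replace ((y - y0) ^ 2) with (Rabs (y - y0) * Rabs (y - y0)) by (rewrite <- (pow2_abs (y - y0)); ring).
  destruct (Rtotal_order y y0) as [Hl|[He|Hl]].
  - destruct (MVT_cor2 (tt a0 a b) t1 y y0 Hl (fun c _ => Ht c)) as [xi [Exi Hxi]].
    assert (B1 := Hd1 xi ltac:(lra)).
    assert (Rabs (xi - y0) <= Rabs (y - y0)) by (rewrite !Rabs_left1 by lra; lra).
    assert (Hle : t1 xi * (y0 - y) >= - (M * Rabs (y - y0) * Rabs (y - y0))).
    { assert (HH : Rabs (t1 xi * (y0 - y)) <= M * Rabs (y - y0) * Rabs (y - y0)).
      { rewrite Rabs_mult. rewrite (Rabs_pos_eq (y0 - y)) by lra.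
        replace (y0 - y) with (Rabs (y - y0)) by (rewrite Rabs_left1; lra).
        apply Rmult_le_compat_r. apply Rabs_pos. eapply Rle_trans. apply B1.
        apply Rmult_le_compat_l; lra. }
      apply abs_le_inv in HH. lra. }
    lra.
  - subst. rewrite Rminus_diag, Rabs_R0. lra.
  - destruct (MVT_cor2 (tt a0 a b) t1 y0 y Hl (fun c _ => Ht c)) as [xi [Exi Hxi]].
    assert (B1 := Hd1 xi ltac:(lra)).
    assert (Rabs (xi - y0) <= Rabs (y - y0)) by (rewrite !Rabs_pos_eq by lra; lra).
    assert (HH : Rabs (t1 xi * (y - y0)) <= M * Rabs (y - y0) * Rabs (y - y0)).
    { rewrite Rabs_mult. apply Rmult_le_compat_r. apply Rabs_pos. eapply Rle_trans. apply B1.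
      apply Rmult_le_compat_l; lra. }
    apply abs_le_inv in HH. lra.
Qed.

Definition hM M := 1 / (2 * (M + 1)).
Definition epsM M := (Rmin (1/2) (sqrt M * hM M / exp (sqrt M / cj alpha j))) ^ 2.

Lemma epsM_facts M : 1 <= M -> 0 < epsM M <= 1/4 /\
  sqrt (epsM M) = Rmin (1/2) (sqrt M * hM M / exp (sqrt M / cj alpha j)).
Proof.
  intros HM. assert (Hh : 0 < hM M) by (unfold hM; apply Rdiv_lt_0_compat; lra).
  assert (HS : 0 < sqrt M) by (apply sqrt_lt_R0; lra).
  assert (Hm : 0 < Rmin (1/2) (sqrt M * hM M / exp (sqrt M / cj alpha j))).
  { apply Rmin_pos. lra. apply Rdiv_lt_0_compat. nra. apply exp_pos. }
  assert (Hm2 : Rmin (1/2) (sqrt M * hM M / exp (sqrt M / cj alpha j)) <= 1/2) by apply Rmin_l.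
  unfold epsM. split. split. apply pow_lt; auto. nra.
  apply sqrt_pow2. lra.
Qed.

Lemma tt_a0_shift a0 a b s y : tt (a0 + s) a b y = tt a0 a b y + s.
Proof. unfold tt, trig. ring. Qed.

Lemma boundary M a0 a b y0 : 1 <= M -> inC n V a0 a b -> 0 <= y0 <= 1 ->
  (forall y, tt a0 a b y0 <= tt a0 a b y) -> tt a0 a b y0 < epsM M ->
  (forall y, 0 <= y <= 1 -> tt a0 a b y <= tt a0 a b y0 + M * (y - y0) ^ 2) ->
  Jfun alpha j n V p a0 a b < Jfun alpha j n V p (a0 + (epsM M - tt a0 a b y0)) a b.
Proof.
  intros HM HC Hy0 Hmin Hlt Htay.
  destruct (epsM_facts M HM) as [[He1 He2] Hse].
  set (eps := epsM M) in *. set (del := tt a0 a b y0) in *. set (s := eps - del).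
  assert (Hs : 0 < s) by (unfold s; lra).
  assert (HC' : inC n V (a0 + s) a b).
  { intros y. specialize (HC y). assert (E := tt_a0_shift a0 a b s y). unfold tt in E. lra. }
  set (g := fun y => dp (tt (a0 + s) a b y)).
  assert (Cg : cont g) by (apply dp_tt_cont; auto).
  assert (Hh : 0 < hM M) by (unfold hM; apply Rdiv_lt_0_compat; lra).
  assert (Hh2 : hM M <= 1/2) by (unfold hM; apply (Rmult_le_reg_r (2 * (M + 1))); [lra|]; unfold Rdiv; 
     rewrite Rmult_assoc, Rinv_l by lra; lra).
  assert (HS : 0 < sqrt M) by (apply sqrt_lt_R0; lra).
  assert (Hcj := cj_pos alpha j).
  assert (Hsq : 0 < sqrt eps) by (apply sqrt_lt_R0; lra).
  assert (HL := log_int g y0 (hM M) (cj alpha j) (sqrt eps) (sqrt M) HS Hsq Hh ltac:(lra) Hy0 Hh2 Cg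
                 ltac:(intros; left; apply dphi_pos)).
  assert (HL' : cj alpha j / sqrt M * ln (1 + sqrt M * hM M / sqrt eps) <= int01 g).
  { apply HL. intros y Hy Hyh. unfold g.
    set (u := y - y0) in *.
    set (w := eps + M * u ^ 2).
    assert (HMh : M * u ^ 2 <= 1/4).
    { assert (u ^ 2 <= hM M ^ 2). { rewrite <- (pow2_abs u). apply pow_incr. split; auto using Rabs_pos. }
      assert (M * hM M ^ 2 <= 1/4).
      { unfold hM. replace (M * (1 / (2 * (M + 1))) ^ 2) with (M / (4 * (M + 1) ^ 2)) by (field; lra).
        apply (Rmult_le_reg_r (4 * (M + 1) ^ 2)). nra. unfold Rdiv. rewrite Rmult_assoc, Rinv_l by nra. nra. }
      nra. }
    assert (Hu2 : 0 <= M * u ^ 2) by (apply Rmult_le_pos; [lra| apply pow2_ge_0]).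
    assert (Ht' : tt (a0 + s) a b y <= w).
    { rewrite tt_a0_shift. specialize (Htay y Hy). fold del in Htay. unfold w, s, u. lra. }
    assert (Ht0 : 0 < tt (a0 + s) a b y) by apply HC'.
    assert (D1 := dphi_decr_le alpha j Ha0 _ _ Ht0 Ht'). fold dp in D1.
    assert (D2 := dphi_sqrt alpha j w Ha ltac:(unfold w; lra)). fold dp in D2.
    assert (Hsw : sqrt w <= sqrt eps + sqrt M * Rabs u).
    { unfold w. eapply Rle_trans. apply sqrt_plus_le; lra.
      rewrite sqrt_mult by (auto using pow2_ge_0; lra). rewrite <- Rsqr_pow2, sqrt_Rsqr_abs. lra. }
    assert (Hw0 : 0 < sqrt w) by (apply sqrt_lt_R0; unfold w; lra).
    assert (cj alpha j / (sqrt eps + sqrt M * Rabs u) <= cj alpha j / sqrt w).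
    { unfold Rdiv. apply Rmult_le_compat_l. lra. apply Rinv_le_contravar; auto. }
    lra. }
  assert (Hgt : 1 < int01 g).
  { eapply Rlt_le_trans; [|apply HL'].
    set (m := Rmin (1/2) (sqrt M * hM M / exp (sqrt M / cj alpha j))) in *.
    assert (Hm : m <= sqrt M * hM M / exp (sqrt M / cj alpha j)) by apply Rmin_r.
    assert (HE : exp (sqrt M / cj alpha j) <= sqrt M * hM M / sqrt eps).
    { rewrite Hse. apply (Rmult_le_reg_r m). rewrite <- Hse; auto. unfold Rdiv. rewrite Rmult_assoc, Rinv_l by (rewrite <- Hse; lra).
      apply (Rmult_le_reg_l (/ exp (sqrt M / cj alpha j))). apply Rinv_0_lt_compat, exp_pos.
      rewrite <- Rmult_assoc, Rinv_l by (apply Rgt_not_eq, exp_pos). lra. }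
    assert (Hln : sqrt M / cj alpha j < ln (1 + sqrt M * hM M / sqrt eps)).
    { rewrite <- (ln_exp (sqrt M / cj alpha j)) at 1. apply ln_increasing. apply exp_pos. lra. }
    apply (Rmult_lt_reg_l (sqrt M / cj alpha j)). apply Rdiv_lt_0_compat; lra.
    replace (sqrt M / cj alpha j * (cj alpha j / sqrt M * ln (1 + sqrt M * hM M / sqrt eps)))
      with (ln (1 + sqrt M * hM M / sqrt eps)) by (field; lra). lra. }
  rewrite !Jfun_eq.
  assert (HI : s * int01 g <= int01 (fun y => phi (tt (a0 + s) a b y)) - int01 (fun y => phi (tt a0 a b y))).
  { rewrite <- I_minus by (apply phi_tt_cont; auto). rewrite <- I_scal by auto.
    apply I_le. apply cont_scal; auto. apply cont_minus; apply phi_tt_cont; auto.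
    intros y _. unfold g. rewrite tt_a0_shift.
    assert (T := phi_tangent alpha j Ha0 (tt a0 a b y) (tt a0 a b y + s) (HC y) ltac:(rewrite <- tt_a0_shift; apply HC')).
    fold phi dp in T. replace (tt a0 a b y - (tt a0 a b y + s)) with (- s) in T by ring. lra. }
  assert (s < s * int01 g) by nra.
  lra.
Qed.

Lemma tt_ext a0 a b a0' a' b' : a0 = a0' -> (forall k, (1 <= k <= n)%nat -> a k = a' k /\ b k = b' k) ->
  forall y, tt a0 a b y = tt a0' a' b' y.
Proof. intros H1 H2 y. unfold tt. rewrite (trig_ext n a0 a b a0' a' b' H1 H2). reflexivity. Qed.

Lemma Jfun_ext a0 a b a0' a' b' : a0 = a0' -> (forall k, (1 <= k <= n)%nat -> a k = a' k /\ b k = b' k) ->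
  Jfun alpha j n V p a0 a b = Jfun alpha j n V p a0' a' b'.
Proof.
  intros H1 H2. rewrite !Jfun_eq. rewrite (I_ext _ (fun y => phi (tt a0' a' b' y))).
  2:{ intros y. rewrite (tt_ext a0 a b a0' a' b' H1 H2). reflexivity. }
  unfold Qf. rewrite (sum1_ext_in n _ (fun k => / (2 * p k) * (a' k ^ 2 + b' k ^ 2))).
  rewrite H1; reflexivity. intros k Hk. destruct (H2 k Hk) as [-> ->]. reflexivity.
Qed.

Lemma tt_close a0 a b a0' a' b' y :
  Rabs (tt a0' a' b' y - tt a0 a b y) <= Rabs (a0' - a0) + sum1 n (fun k => Rabs (a' k - a k) + Rabs (b' k - b k)).
Proof.
  unfold tt. replace (trig n a0' a' b' y - V y - (trig n a0 a b y - V y)) with (trig n a0' a' b' y - trig n a0 a b y) by ring.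
  rewrite (trig_diff n a0 a b a0' a' b' y).
  replace (trig n a0 a b y + trig n (a0' - a0) (fun k => a' k - a k) (fun k => b' k - b k) y - trig n a0 a b y)
    with (trig n (a0' - a0) (fun k => a' k - a k) (fun k => b' k - b k) y) by ring.
  apply trig_abs.
Qed.

Lemma le_eps x y : (forall e, 0 < e -> x <= y + e) -> x <= y.
Proof.
  intros H. destruct (Rle_or_lt x y); auto. specialize (H ((x - y) / 2) ltac:(lra)). lra.
Qed.

Lemma int_tt a0 a b : int01 (tt a0 a b) = a0 - int01 V.
Proof. unfold tt. rewrite (I_minus (trig n a0 a b) V). rewrite I_trig. reflexivity. apply trig_cont. apply V_cont. Qed.

Lemma coercive : exists A0, forall a0 a b, inC n V a0 a b ->
  Jfun alpha j n V p a0 a b <= A0 - int01 V / 2 - a0 / 2 - Qf a b /\ int01 V < a0.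
Proof.
  destruct (phi_coercive alpha j Ha0) as [A0 HA]. exists A0. intros a0 a b HC.
  assert (Hint := int_tt a0 a b).
  split.
  - rewrite Jfun_eq.
    assert (int01 (fun y => phi (tt a0 a b y)) <= int01 (fun y => A0 + / 2 * tt a0 a b y)).
    { apply I_le. apply phi_tt_cont; auto. apply cont_plus. apply cont_const. apply cont_scal, tt_cont.
      intros y _. specialize (HA _ (HC y)). unfold phi. unfold tt in *. lra. }
    rewrite I_plus, I_const, I_scal in H by (auto using cont_const, cont_scal, tt_cont).
    fold (tt a0 a b) in H. rewrite Hint in H. lra.
  - assert (0 < int01 (tt a0 a b)). { apply I_pos_strict. apply tt_cont. intros y _. apply HC. }
    lra.
Qed.

Lemma abs_le_sq x : Rabs x <= x ^ 2 + 1.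
Proof. rewrite <- (pow2_abs x). generalize (Rabs_pos x). nra. Qed.

Definition decA (u : nat -> R) := fun k : nat => u k.
Definition decB (u : nat -> R) := fun k : nat => u (n + k)%nat.
Definition enc (a0 : R) (a b : nat -> R) : nat -> R := fun i =>
  if Nat.eq_dec i 0 then a0 else if le_lt_dec i n then a i else if le_lt_dec i (2 * n) then b (i - n)%nat else 0.


Lemma enc_0 a0 a b : enc a0 a b 0 = a0.
Proof. reflexivity. Qed.

Lemma enc_ok a0 a b : forall k, (1 <= k <= n)%nat -> decA (enc a0 a b) k = a k /\ decB (enc a0 a b) k = b k.
Proof.
  intros k Hk. unfold decA, decB, enc. split.
  - destruct (Nat.eq_dec k 0); [lia|]. destruct (le_lt_dec k n); [auto|lia].
  - destruct (Nat.eq_dec (n + k) 0); [lia|]. destruct (le_lt_dec (n + k) n); [lia|].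
    destruct (le_lt_dec (n + k) (2 * n)); [|lia]. f_equal. lia.
Qed.

Lemma enc_zero a0 a b i : (2 * n < i)%nat -> enc a0 a b i = 0.
Proof.
  intros H. unfold enc. destruct (Nat.eq_dec i 0); [lia|]. destruct (le_lt_dec i n); [lia|].
  destruct (le_lt_dec i (2 * n)); [lia|]. reflexivity.
Qed.

Lemma enc_bound a0 a b B : Rabs a0 <= B -> (forall k, (1 <= k <= n)%nat -> Rabs (a k) <= B /\ Rabs (b k) <= B) ->
  forall i, (i <= 2 * n)%nat -> Rabs (enc a0 a b i) <= B.
Proof.
  intros H0 H i Hi. unfold enc. destruct (Nat.eq_dec i 0); auto.
  destruct (le_lt_dec i n). apply H; lia. destruct (le_lt_dec i (2 * n)); [|lia]. apply H; lia.
Qed.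


Lemma Phi_lip a0 a b a0' a' b' eps D : 0 < eps -> (forall y, eps <= tt a0 a b y) -> (forall y, eps <= tt a0' a' b' y) ->
  Rabs (a0' - a0) + sum1 n (fun k => Rabs (a' k - a k) + Rabs (b' k - b k)) <= D ->
  Rabs (int01 (fun y => phi (tt a0' a' b' y)) - int01 (fun y => phi (tt a0 a b y))) <= dp eps * D.
Proof.
  intros He H1 H2 HD.
  assert (HC : inC n V a0 a b) by (intros y; specialize (H1 y); unfold tt in H1; lra).
  assert (HC' : inC n V a0' a' b') by (intros y; specialize (H2 y); unfold tt in H2; lra).
  rewrite <- I_minus by (apply phi_tt_cont; auto).
  eapply Rle_trans. apply I_abs. apply cont_minus; apply phi_tt_cont; auto.
  rewrite <- (I_const (dp eps * D)). apply I_le.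
  apply cont_abs, cont_minus; apply phi_tt_cont; auto. apply cont_const.
  intros y _. eapply Rle_trans. apply (phi_lip alpha j Ha0 _ _ eps He (H2 y) (H1 y)).
  apply Rmult_le_compat_l. left; apply dphi_pos. eapply Rle_trans. apply tt_close. exact HD.
Qed.

Definition Pinv := sum1 n (fun k => / (2 * p k)).

Lemma Q_lip a b a' b' B d : 0 <= d -> (forall k, (1 <= k <= n)%nat -> Rabs (a k) <= B /\ Rabs (b k) <= B /\
    Rabs (a' k) <= B /\ Rabs (b' k) <= B /\ Rabs (a' k - a k) <= d /\ Rabs (b' k - b k) <= d) ->
  Rabs (Qf a' b' - Qf a b) <= 4 * B * d * Pinv.
Proof.
  intros Hd H. unfold Qf, Pinv. rewrite <- sum1_minus, <- sum1_scal.
  eapply Rle_trans. apply sum1_abs. apply sum1_le. intros k Hk.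
  destruct (H k Hk) as [H1 [H2 [H3 [H4 [H5 H6]]]]]. assert (Hpk := Hp k Hk).
  assert (Hi : 0 < / (2 * p k)) by (apply Rinv_0_lt_compat; lra).
  replace (/ (2 * p k) * (a' k ^ 2 + b' k ^ 2) - / (2 * p k) * (a k ^ 2 + b k ^ 2))
    with (/ (2 * p k) * ((a' k - a k) * (a' k + a k) + (b' k - b k) * (b' k + b k))) by ring.
  rewrite Rabs_mult, (Rabs_pos_eq (/ (2 * p k))) by lra.
  replace (4 * B * d * / (2 * p k)) with (/ (2 * p k) * (4 * B * d)) by ring.
  apply Rmult_le_compat_l. lra.
  eapply Rle_trans. apply Rabs_triang. rewrite !Rabs_mult.
  assert (Rabs (a' k + a k) <= 2 * B) by (eapply Rle_trans; [apply Rabs_triang|lra]).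
  assert (Rabs (b' k + b k) <= 2 * B) by (eapply Rle_trans; [apply Rabs_triang|lra]).
  assert (Rabs (a' k - a k) * Rabs (a' k + a k) <= d * (2 * B)) by (apply Rmult_le_compat; auto using Rabs_pos).
  assert (Rabs (b' k - b k) * Rabs (b' k + b k) <= d * (2 * B)) by (apply Rmult_le_compat; auto using Rabs_pos).
  lra.
Qed.

Lemma dist_bound (u v : nat -> R) d : (forall i, (i <= 2 * n)%nat -> Rabs (v i - u i) < d) ->
  Rabs (v 0%nat - u 0%nat) + sum1 n (fun k => Rabs (decA v k - decA u k) + Rabs (decB v k - decB u k)) <= (2 * INR n + 1) * d.
Proof.
  intros H. assert (H0 := H 0%nat ltac:(lia)).
  assert (sum1 n (fun k => Rabs (decA v k - decA u k) + Rabs (decB v k - decB u k)) <= sum1 n (fun _ => 2 * d)).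
  { apply sum1_le. intros k Hk. unfold decA, decB.
    assert (H1 := H k ltac:(lia)). assert (H2 := H (n + k)%nat ltac:(lia)). lra. }
  rewrite sum1_const in H1. lra.
Qed.

Lemma abs3 x y z : Rabs (x - y - z) <= Rabs x + Rabs y + Rabs z.
Proof. unfold Rabs. destruct (Rcase_abs (x - y - z)), (Rcase_abs x), (Rcase_abs y), (Rcase_abs z); lra. Qed.

Lemma existence : exists a0s as_ bs, inC n V a0s as_ bs /\ EL a0s as_ bs /\
  forall a0 a b, inC n V a0 a b -> Jfun alpha j n V p a0 a b <= Jfun alpha j n V p a0s as_ bs.
Proof.
  destruct coercive as [A0 HA].
  destruct (continuity_ab_maj V 0 1) as [xm [Hxm _]]. lra. intros; apply cont_ct, V_cont.
  set (Vm := V xm).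
  assert (HVm : forall y, V y <= Vm).
  { intros y. destruct (per_reduce V V_per y) as [z [Hz ->]]. apply Hxm; auto. }
  set (IV := int01 V).
  set (a00 := Vm + 1).
  assert (Ht0 : forall y, 1 <= tt a00 (fun _ => 0) (fun _ => 0) y).
  { intros y. unfold tt. rewrite trig_zero. specialize (HVm y). unfold a00. lra. }
  assert (HC0 : inC n V a00 (fun _ => 0) (fun _ => 0)).
  { intros y. specialize (Ht0 y). unfold tt in Ht0. lra. }
  set (J0 := Jfun alpha j n V p a00 (fun _ => 0) (fun _ => 0)).
  set (B0 := A0 - IV / 2 - J0).
  set (Psum := sum1 n p).
  set (R0 := Rabs (2 * B0) + Rabs IV + 2 * Psum * Rabs (B0 - IV / 2) + 1 + Rabs a00).
  assert (HPs : 0 <= Psum). { apply sum1_ge0. intros k Hk. specialize (Hp k Hk). lra. }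
  assert (HR0 : 0 <= R0).
  { unfold R0. generalize (Rabs_pos (2 * B0)) (Rabs_pos IV) (Rabs_pos (B0 - IV / 2)) (Rabs_pos a00).
    intros. assert (0 <= 2 * Psum * Rabs (B0 - IV / 2)) by (apply Rmult_le_pos; lra). lra. }
  assert (Hbound : forall a0 a b, inC n V a0 a b -> J0 <= Jfun alpha j n V p a0 a b ->
     Rabs a0 <= R0 /\ forall k, (1 <= k <= n)%nat -> Rabs (a k) <= R0 /\ Rabs (b k) <= R0).
  { intros a0 a b HC HJ. destruct (HA a0 a b HC) as [H1 H2]. fold IV in H1, H2.
    assert (HQ0 : 0 <= Qf a b).
    { apply sum1_ge0. intros k Hk. specialize (Hp k Hk). apply Rmult_le_pos.
      left; apply Rinv_0_lt_compat; lra. apply Rplus_le_le_0_compat; apply pow2_ge_0. }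
    assert (Hq : Qf a b <= Rabs (B0 - IV / 2)).
    { eapply Rle_trans; [|apply Rle_abs]. unfold B0. lra. }
    generalize (Rabs_pos (2 * B0)) (Rabs_pos IV) (Rabs_pos (B0 - IV / 2)) (Rabs_pos a00). intros P1 P2 P3 P4.
    assert (0 <= 2 * Psum * Rabs (B0 - IV / 2)) by (apply Rmult_le_pos; lra).
    split.
    - assert (a0 <= 2 * B0) by (unfold B0; lra).
      assert (Rabs a0 <= Rabs (2 * B0) + Rabs IV).
      { unfold Rabs at 1. destruct (Rcase_abs a0).
        generalize (Rle_abs (- IV)); rewrite Rabs_Ropp; lra. generalize (Rle_abs (2 * B0)); lra. }
      unfold R0. lra.
    - intros k Hk. assert (Hpk := Hp k Hk).
      assert (Hterm : / (2 * p k) * (a k ^ 2 + b k ^ 2) <= Qf a b).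
      { apply (sum1_term n (fun k => / (2 * p k) * (a k ^ 2 + b k ^ 2))); auto.
        intros i Hi. specialize (Hp i Hi). apply Rmult_le_pos.
        left; apply Rinv_0_lt_compat; lra. apply Rplus_le_le_0_compat; apply pow2_ge_0. }
      assert (Hpp : p k <= Psum) by (apply sum1_term; auto; intros i Hi; specialize (Hp i Hi); lra).
      assert (Hsq : a k ^ 2 + b k ^ 2 <= 2 * Psum * Rabs (B0 - IV / 2)).
      { assert (a k ^ 2 + b k ^ 2 <= 2 * p k * Qf a b).
        { apply (Rmult_le_reg_l (/ (2 * p k))). apply Rinv_0_lt_compat; lra.
          replace (/ (2 * p k) * (2 * p k * Qf a b)) with (Qf a b) by (field; lra). lra. }
        assert (2 * p k * Qf a b <= 2 * Psum * Rabs (B0 - IV / 2)).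
        { apply Rmult_le_compat; lra. }
        lra. }
      generalize (abs_le_sq (a k)) (abs_le_sq (b k)) (pow2_ge_0 (a k)) (pow2_ge_0 (b k)). intros.
      unfold R0. split; lra. }
  destruct (taylor (R0 + 1) ltac:(lra)) as [M [HM Htay]].
  destruct (epsM_facts M HM) as [[He1 He2] _].
  set (eps := epsM M) in *.
  set (Aset := fun u : nat -> R => (forall i, (2 * n < i)%nat -> u i = 0) /\
       (forall i, (i <= 2 * n)%nat -> Rabs (u i) <= R0 + 1) /\
       (forall y, eps <= tt (u 0%nat) (decA u) (decB u) y)).
  set (F := fun u : nat -> R => Jfun alpha j n V p (u 0%nat) (decA u) (decB u)).
  assert (HencA : forall a0 a b, Rabs a0 <= R0 + 1 -> (forall k, (1 <= k <= n)%nat -> Rabs (a k) <= R0 + 1 /\ Rabs (b k) <= R0 + 1) ->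
     (forall y, eps <= tt a0 a b y) -> Aset (enc a0 a b) /\ F (enc a0 a b) = Jfun alpha j n V p a0 a b).
  { intros a0 a b H1 H2 H3. split. split; [|split].
    - apply enc_zero.
    - apply enc_bound; auto.
    - intros y. rewrite (tt_ext (enc a0 a b 0) (decA (enc a0 a b)) (decB (enc a0 a b)) a0 a b); auto.
      apply enc_ok.
    - unfold F. apply Jfun_ext. reflexivity. apply enc_ok. }
  assert (Hn0 : 0 <= INR n) by apply pos_INR.
  assert (HPinv : 0 <= Pinv). { apply sum1_ge0. intros k Hk. specialize (Hp k Hk). left; apply Rinv_0_lt_compat; lra. }
  assert (E1 : exists v, Aset v).
  { exists (enc a00 (fun _ => 0) (fun _ => 0)). apply HencA.
    - unfold R0. generalize (Rabs_pos (2 * B0)) (Rabs_pos IV) (Rabs_pos (B0 - IV / 2)). intros.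
      assert (0 <= 2 * Psum * Rabs (B0 - IV / 2)) by (apply Rmult_le_pos; lra). lra.
    - intros; rewrite Rabs_R0; lra.
    - intros y. specialize (Ht0 y). lra. }
  assert (E2 : forall v, Aset v -> forall i, (i <= 2 * n)%nat -> Rabs (v i) <= R0 + 1).
  { intros v [_ [H _]]; auto. }
  assert (E3 : forall v, Aset v -> forall i, (2 * n < i)%nat -> v i = 0).
  { intros v [H _]; auto. }
  assert (E4 : forall u, (forall i, (2 * n < i)%nat -> u i = 0) ->
     (forall e, 0 < e -> exists v, Aset v /\ forall i, (i <= 2 * n)%nat -> Rabs (v i - u i) < e) -> Aset u).
  { intros u Hz Happ. split; [auto|split].
    - intros i Hi. apply le_eps. intros e He. destruct (Happ e He) as [v [[_ [Hb _]] Hv]].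
      specialize (Hv i Hi). specialize (Hb i Hi).
      assert (Rabs (u i) <= Rabs (v i) + Rabs (v i - u i)).
      { replace (u i) with (v i + - (v i - u i)) at 1 by ring. eapply Rle_trans. apply Rabs_triang.
        rewrite Rabs_Ropp. lra. }
      lra.
    - intros y. apply le_eps. intros e He.
      set (e' := e / (2 * INR n + 1)).
      assert (He' : 0 < e') by (unfold e'; apply Rdiv_lt_0_compat; lra).
      destruct (Happ e' He') as [v [[_ [_ Ht]] Hv]].
      assert (HD := dist_bound u v e' Hv).
      assert (HC := tt_close (u 0%nat) (decA u) (decB u) (v 0%nat) (decA v) (decB v) y).
      assert (Ee : (2 * INR n + 1) * e' = e) by (unfold e'; field; lra).
      specialize (Ht y). apply abs_le_inv in HC. lra. }
  set (Lc := dp eps * (2 * INR n + 1) + 1 + 4 * (R0 + 1) * Pinv).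
  assert (HLc : 0 <= Lc).
  { unfold Lc. assert (0 <= dp eps * (2 * INR n + 1)) by (apply Rmult_le_pos; [left; apply dphi_pos| lra]).
    assert (0 <= 4 * (R0 + 1) * Pinv) by (apply Rmult_le_pos; lra). lra. }
  assert (E5 : forall u, Aset u -> forall e, 0 < e -> exists d, 0 < d /\ forall v, Aset v ->
     (forall i, (i <= 2 * n)%nat -> Rabs (v i - u i) < d) -> Rabs (F v - F u) < e).
  { intros u [Hzu [Hbu Htu]] e He. exists (e / (Lc + 1)). split. apply Rdiv_lt_0_compat; lra.
    intros v [Hzv [Hbv Htv]] Hv. set (d := e / (Lc + 1)) in *.
    assert (Hd0 : 0 < d) by (unfold d; apply Rdiv_lt_0_compat; lra).
    assert (HD := dist_bound u v d Hv).
    assert (HP := Phi_lip (u 0%nat) (decA u) (decB u) (v 0%nat) (decA v) (decB v) eps _ He1 Htu Htv HD).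
    assert (HQ := Q_lip (decA u) (decB u) (decA v) (decB v) (R0 + 1) d ltac:(lra)).
    assert (HQ' : Rabs (Qf (decA v) (decB v) - Qf (decA u) (decB u)) <= 4 * (R0 + 1) * d * Pinv).
    { apply HQ. intros k Hk. unfold decA, decB.
      repeat split; try (apply Hbu; lia); try (apply Hbv; lia); left; apply Hv; lia. }
    assert (H0 := Hv 0%nat ltac:(lia)).
    assert (EqF : F v - F u = (int01 (fun y => phi (tt (v 0%nat) (decA v) (decB v) y)) - int01 (fun y => phi (tt (u 0%nat) (decA u) (decB u) y)))
            - (v 0%nat - u 0%nat) - (Qf (decA v) (decB v) - Qf (decA u) (decB u))) by (unfold F; rewrite !Jfun_eq; unfold phi; ring).
    rewrite EqF.
    eapply Rle_lt_trans. apply abs3.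
    assert (Hlt : Lc * d < e).
    { unfold d. apply (Rmult_lt_reg_r (Lc + 1)). lra. unfold Rdiv.
      replace (Lc * (e * / (Lc + 1)) * (Lc + 1)) with (Lc * e) by (field; lra). nra. }
    assert (dp eps * ((2 * INR n + 1) * d) = dp eps * (2 * INR n + 1) * d) by ring.
    assert (Lc * d = dp eps * (2 * INR n + 1) * d + d + 4 * (R0 + 1) * d * Pinv) by (unfold Lc; ring).
    lra. }
  destruct (EVTmod.evt_nat (2 * n) F Aset (R0 + 1) E1 E2 E3 E4 E5) as [us [[Hzs [Hbs Hts]] Hmaxs]].
  assert (HCs : inC n V (us 0%nat) (decA us) (decB us)).
  { intros y. specialize (Hts y). unfold tt in Hts. lra. }
  assert (Hmax : forall a0 a b, inC n V a0 a b -> Jfun alpha j n V p a0 a b <= Jfun alpha j n V p (us 0%nat) (decA us) (decB us)).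
  { intros a0 a b HC. apply Rnot_lt_le. intros Hlt.
    assert (HJ0 : J0 <= F us).
    { destruct (HencA a00 (fun _ => 0) (fun _ => 0)) as [HA1 HA2].
      - unfold R0. generalize (Rabs_pos (2 * B0)) (Rabs_pos IV) (Rabs_pos (B0 - IV / 2)). intros.
        assert (0 <= 2 * Psum * Rabs (B0 - IV / 2)) by (apply Rmult_le_pos; lra). lra.
      - intros; rewrite Rabs_R0; lra.
      - intros y. specialize (Ht0 y). lra.
      - fold J0 in HA2. rewrite <- HA2. apply Hmaxs; auto. }
    fold (F us) in Hlt.
    destruct (Hbound a0 a b HC ltac:(lra)) as [Hb0 Hbk].
    destruct (tt_min a0 a b) as [y0 [Hy0 Hmin]].
    destruct (Rle_or_lt eps (tt a0 a b y0)) as [Hge|Hlt2].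
    - destruct (HencA a0 a b) as [HA1 HA2]. lra. intros k Hk; destruct (Hbk k Hk); split; lra.
      intros y. specialize (Hmin y). lra.
      specialize (Hmaxs _ HA1). lra.
    - assert (Htay' := Htay a0 a b ltac:(intros k Hk; destruct (Hbk k Hk); split; lra) y0 Hy0 Hmin).
      assert (Hbd := boundary M a0 a b y0 HM HC Hy0 Hmin Hlt2 Htay'). fold eps in Hbd.
      assert (Hd0 : 0 < tt a0 a b y0) by apply HC.
      destruct (HencA (a0 + (eps - tt a0 a b y0)) a b) as [HA1 HA2].
      + eapply Rle_trans. apply Rabs_triang. rewrite (Rabs_pos_eq (eps - tt a0 a b y0)) by lra. lra.
      + intros k Hk; destruct (Hbk k Hk); split; lra.
      + intros y. rewrite tt_a0_shift. specialize (Hmin y). lra.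
      + specialize (Hmaxs _ HA1). lra. }
  exists (us 0%nat), (decA us), (decB us). split; [auto|split; auto].
  apply (EL_of_max _ _ _ eps He1); auto.
Qed.

Lemma EL_of_basic a0 a b : inC n V a0 a b -> int01 (fun y => dp (tt a0 a b y)) = 1 ->
  (forall k, (1 <= k <= n)%nat -> int01 (fun y => dp (tt a0 a b y) * cosk k y) = a k / p k /\
                                   int01 (fun y => dp (tt a0 a b y) * sink k y) = b k / p k) ->
  EL a0 a b.
Proof.
  intros HC H1 Hk h0 ha hb. rewrite I_trig_mul by (apply dp_tt_cont; auto). rewrite H1.
  rewrite Rmult_1_r. f_equal. apply sum1_ext_in. intros k Hk'. destruct (Hk k Hk') as [-> ->].
  specialize (Hp k Hk'). field. lra.
Qed.

Lemma basic_of_EL a0 a b : EL a0 a b -> int01 (fun y => dp (tt a0 a b y)) = 1 /\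
  (forall k, (1 <= k <= n)%nat -> int01 (fun y => dp (tt a0 a b y) * cosk k y) = a k / p k /\
                                   int01 (fun y => dp (tt a0 a b y) * sink k y) = b k / p k).
Proof.
  intros HE. split.
  - assert (H := HE 1 (fun _ => 0) (fun _ => 0)).
    rewrite (I_ext _ (fun y => dp (tt a0 a b y))) in H by (intros; rewrite trig_e0; ring).
    rewrite H. rewrite (sum1_ext_in _ _ (fun _ => 0)). rewrite sum1_const. ring.
    intros k Hk. specialize (Hp k Hk). field. lra.
  - intros k Hk. split.
    + assert (H := HE 0 (fun i => if Nat.eq_dec i k then 1 else 0) (fun _ => 0)).
      rewrite (I_ext _ (fun y => dp (tt a0 a b y) * cosk k y)) in H by (intros; rewrite trig_ea; auto).
      rewrite H. rewrite (sum1_ext_in _ _ (fun i => if Nat.eq_dec i k then a i / p i else 0)).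
      rewrite sum1_single; auto. ring.
      intros i Hi. specialize (Hp i Hi). destruct (Nat.eq_dec i k); field; lra.
    + assert (H := HE 0 (fun _ => 0) (fun i => if Nat.eq_dec i k then 1 else 0)).
      rewrite (I_ext _ (fun y => dp (tt a0 a b y) * sink k y)) in H by (intros; rewrite trig_eb; auto).
      rewrite H. rewrite (sum1_ext_in _ _ (fun i => if Nat.eq_dec i k then b i / p i else 0)).
      rewrite sum1_single; auto. ring.
      intros i Hi. specialize (Hp i Hi). destruct (Nat.eq_dec i k); field; lra.
Qed.

Lemma G_int (m : R -> R) x : cont m ->
  int01 (fun y => sum0 n (fun k => p k * cos (2 * PI * INR k * (x - y))) * m y) =
  p 0%nat * int01 m + sum1 n (fun k => p k * cos (2 * PI * INR k * x) * int01 (fun y => m y * cosk k y)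
                                     + p k * sin (2 * PI * INR k * x) * int01 (fun y => m y * sink k y)).
Proof.
  intros Hm.
  rewrite (I_ext _ (fun y => p 0%nat * m y + sum1 n (fun k => (p k * cos (2 * PI * INR k * x)) * (m y * cosk k y)
                                     + (p k * sin (2 * PI * INR k * x)) * (m y * sink k y)))).
  2:{ intros y. unfold sum0. simpl INR. rewrite Rmult_0_r, Rmult_0_l, cos_0, Rmult_plus_distr_r.
      f_equal. ring. rewrite Rmult_comm, <- sum1_scal. apply sum1_ext_in. intros k _.
      replace (2 * PI * INR k * (x - y)) with (2 * PI * INR k * x - 2 * PI * INR k * y) by ring.
      rewrite cos_minus. unfold cosk, sink. ring. }
  assert (Hc : forall k, cont (fun y => (p k * cos (2 * PI * INR k * x)) * (m y * cosk k y)
                                     + (p k * sin (2 * PI * INR k * x)) * (m y * sink k y))).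
  { intros k. apply cont_plus; apply cont_scal; apply cont_mult; auto; [apply cont_cos| apply cont_sin]. }
  rewrite I_plus by (auto using cont_scal; apply (cont_sum1 n (fun k y => _)); auto).
  rewrite I_scal by auto. f_equal.
  rewrite (I_sum1 n (fun k y => (p k * cos (2 * PI * INR k * x)) * (m y * cosk k y)
                                     + (p k * sin (2 * PI * INR k * x)) * (m y * sink k y))) by auto.
  apply sum1_ext_in. intros k _. rewrite I_plus, !I_scal. reflexivity.
  apply cont_mult; auto; apply cont_sin. apply cont_mult; auto; apply cont_cos.
  apply cont_scal; apply cont_mult; auto; apply cont_cos.
  apply cont_scal; apply cont_mult; auto; apply cont_sin.
Qed.
End Main.

Lemma jpos j : j <> 0 -> 0 < j ^ 2 / 2.
Proof. intros Hj. rewrite <- Rsqr_pow2. assert (H := Rsqr_pos_lt j Hj). lra. Qed.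

Lemma alg1 alpha j t : 0 < alpha -> j <> 0 -> 0 < t ->
  j ^ 2 / (2 * Rpower (dphi alpha j t) alpha) = t.
Proof.
  intros Ha Hj Ht. assert (HK := jpos j Hj).
  unfold dphi, cj, c_j.
  rewrite (Rpower_div (Rpower (j ^ 2 / 2) (1 / alpha)) (Rpower t (1 / alpha))) by apply Rpower_pos.
  rewrite !Rpower_invol by lra. field. lra.
Qed.

Lemma alg2 alpha j m : 0 < alpha -> j <> 0 -> 0 < m ->
  dphi alpha j (j ^ 2 / (2 * Rpower m alpha)) = m.
Proof.
  intros Ha Hj Hm. assert (HK := jpos j Hj). assert (HR := Rpower_pos m alpha).
  unfold dphi, cj, c_j. replace (j ^ 2 / (2 * Rpower m alpha)) with ((j ^ 2 / 2) / Rpower m alpha) by (field; lra).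
  rewrite (Rpower_div (j ^ 2 / 2) (Rpower m alpha)) by auto. rewrite Rpower_invol' by lra. field.
  split. lra. apply Rgt_not_eq, Rpower_pos.
Qed.

Lemma cont_of_continuity f : continuity f -> cont f.
Proof. intros H x. apply continuity_pt_filterlim. apply H. Qed.

Theorem corollary1p2 (alpha j : R) (V : R -> R) (n : nat) (p : nat -> R) :
  0 < alpha <= 2 -> j <> 0 -> C2_T V ->
  p O > 0 -> (forall k, (1 <= k <= n)%nat -> p k > 0) ->
  let G := fun x => sum0 n (fun k => p k * cos (2 * PI * INR k * x)) in
  exists (a0s : R) (as_ bs : nat -> R),
    (* (a0s, as_, bs) is the unique maximizer over C *)
    inC n V a0s as_ bs /\
    (forall a0 a b, inC n V a0 a b ->
       Jfun alpha j n V p a0 a b <= Jfun alpha j n V p a0s as_ bs) /\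
    (forall a0 a b, inC n V a0 a b ->
       (forall a0' a' b', inC n V a0' a' b' ->
          Jfun alpha j n V p a0' a' b' <= Jfun alpha j n V p a0 a b) ->
       coef_eq n a0 a b a0s as_ bs) /\
    (* (P) has exactly one solution, given by the formula *)
    (forall (m : R -> R) (H : R),
       solves_P alpha j V G m H <->
       ((forall x, m x = c_j alpha j / Rpower (trig n a0s as_ bs x - V x) (1 / alpha))
        /\ H = a0s - p O)).
Proof.
  intros Ha Hj HV Hp0 Hp G.
  destruct (existence alpha j V n p Ha HV Hp) as [a0s [as_ [bs [HCs [HEs Hmax]]]]].
  exists a0s, as_, bs. split; [auto|split; [auto|split]].
  - intros a0 a b HC Hm.
    destruct (GI alpha j V n p Ha HV Hp a0s as_ bs a0 a b HCs HEs HC) as [_ H2].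
    apply H2. apply Hm. auto.
  - destruct (basic_of_EL alpha j V n p Hp a0s as_ bs HEs) as [HE1 HEk].
    assert (Hint : forall (m : R -> R) x, cont m -> int01 (fun y => G (x - y) * m y) =
        p 0%nat * int01 m + sum1 n (fun k => p k * cos (2 * PI * INR k * x) * int01 (fun y => m y * cosk k y)
                                     + p k * sin (2 * PI * INR k * x) * int01 (fun y => m y * sink k y))).
    { intros m x Hm. unfold G. apply G_int; auto. }
    intros m H. split.
    + intros [Hmc [Hmper [Hmpos [Hm1 Heq]]]].
      apply cont_of_continuity in Hmc.
      set (a0 := H + p 0%nat).
      set (a := fun k => p k * int01 (fun y => m y * cosk k y)).
      set (b := fun k => p k * int01 (fun y => m y * sink k y)).
      assert (Htt : forall x, tt V n a0 a b x = j ^ 2 / (2 * Rpower (m x) alpha)).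
      { intros x. specialize (Heq x). rewrite Hint in Heq by auto. rewrite Hm1 in Heq.
        unfold tt, trig, a0, a, b. 
        assert (E : sum1 n (fun k => p k * cos (2 * PI * INR k * x) * int01 (fun y => m y * cosk k y) +
                      p k * sin (2 * PI * INR k * x) * int01 (fun y => m y * sink k y)) =
                    sum1 n (fun k => p k * int01 (fun y => m y * cosk k y) * cos (2 * PI * INR k * x) +
                      p k * int01 (fun y => m y * sink k y) * sin (2 * PI * INR k * x)))
          by (apply sum1_ext_in; intros; ring).
        rewrite E in Heq. lra. }
      assert (HC : inC n V a0 a b).
      { intros x. assert (Hp' := Htt x). unfold tt in Hp'. rewrite Hp'.
        apply Rdiv_lt_0_compat. generalize (jpos j Hj); lra. assert (0 < Rpower (m x) alpha) by apply Rpower_pos. lra. }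
      assert (Hmd : forall x, dphi alpha j (tt V n a0 a b x) = m x).
      { intros x. rewrite Htt. apply alg2; [lra|auto|apply Hmpos]. }
      assert (HE : EL alpha j V n p a0 a b).
      { apply EL_of_basic; auto.
        - rewrite (I_ext _ m) by auto. auto.
        - intros k Hk. specialize (Hp k Hk). split.
          + rewrite (I_ext _ (fun y => m y * cosk k y)) by (intros; rewrite Hmd; auto). unfold a. field. lra.
          + rewrite (I_ext _ (fun y => m y * sink k y)) by (intros; rewrite Hmd; auto). unfold b. field. lra. }
      destruct (GI alpha j V n p Ha HV Hp a0 a b a0s as_ bs HC HE HCs) as [H1 _].
      destruct (GI alpha j V n p Ha HV Hp a0s as_ bs a0 a b HCs HEs HC) as [_ H2].
      destruct (H2 H1) as [E0 Ek].
      split.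
      * intros x. rewrite <- Hmd. rewrite (tt_ext V n a0 a b a0s as_ bs E0 Ek). reflexivity.
      * unfold a0 in E0. lra.
    + intros [Hmx HH].
      assert (Hmd : forall x, m x = dphi alpha j (tt V n a0s as_ bs x)) by (intros; rewrite Hmx; reflexivity).
      assert (Hmc : cont m).
      { intros x. replace m with (fun y => dphi alpha j (tt V n a0s as_ bs y)).
        apply dp_tt_cont; auto. apply functional_extensionality; intros; auto. }
      split; [|split; [|split; [|split]]].
      * intros x. apply cont_ct, Hmc.
      * intros x. rewrite !Hmd. rewrite tt_per; auto.
      * intros x. rewrite Hmd. apply dphi_pos.
      * rewrite (I_ext _ (fun y => dphi alpha j (tt V n a0s as_ bs y))) by auto. auto.
      * intros x. rewrite Hint by auto.
        rewrite (I_ext m (fun y => dphi alpha j (tt V n a0s as_ bs y))) by auto. rewrite HE1.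
        rewrite (sum1_ext_in _ _ (fun k => as_ k * cos (2 * PI * INR k * x) + bs k * sin (2 * PI * INR k * x))).
        2:{ intros k Hk. destruct (HEk k Hk) as [Hc Hs].
            rewrite (I_ext _ (fun y => dphi alpha j (tt V n a0s as_ bs y) * cosk k y)) by (intros; rewrite Hmd; auto).
            rewrite (I_ext (fun y => m y * sink k y) (fun y => dphi alpha j (tt V n a0s as_ bs y) * sink k y)) by (intros; rewrite Hmd; auto).
            rewrite Hc, Hs. specialize (Hp k Hk). field. lra. }
        rewrite Hmd, alg1 by (auto; try lra; apply HCs).
        unfold tt, trig. rewrite HH. ring.
Qed.
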